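(* Let $t_0\in\mathbb{R}$ and let $C$ be the third-order linear time-varying system $$c_3(t)y'''(t)+c_2(t)y''(t)+c_1(t)y'(t)+c_0(t)y(t)=x(t),\qquad t\ge t_0,$$ with $c_3(t)\neq 0$ for all $t\ge t_0$ and coefficients differentiable as often as needed below. Then: (i) $C$ can be decomposed as the cascade connection of a commutative pair consisting of a first-order system $A:\ a_1y_A'+a_0y_A=x_A$ and a second-order system $B:\ b_2y_B''+b_1y_B'+b_0y_B=x_B$ (with $a_1\neq0$, $b_2\neq 0$) if and only if there exist real constants $e_2\neq 0$, $e_1$, $e_0$ such that, defining $$a_1=\Big(\frac{c_3}{e_2}\Big)^{1/3},\qquad a_0=\frac{c_2-c_3'}{3e_2^{1/3}c_3^{2/3}}-\frac{e_1}{3e_2},$$ $$b_2=e_2a_1^2,\qquad b_1=e_2(a_1'+2a_0)a_1+e_1a_1,\qquad b_0=e_2(a_0'a_1+a_0^2)+e_1a_0+e_0,$$ the remaining coefficients of $C$ satisfy $$c_1=a_1b_1'+a_1b_0+a_0b_1,\qquad c_0=a_1b_0'+a_0b_0$$ (i.e. $c_1$ and $c_0$ are expressible in terms of $c_3$, $c_2$ and the constants $e_2,e_1,e_0$ through these formulas). (ii) If moreover the initial value $y(t_0)$ of $C$ is nonzero, the additional necessary and sufficient conditions for this decomposition to hold including initial conditions are $$e_2+e_1+e_0=1,$$ $$y_A(t_0)=y_B(t_0)=y(t_0),\qquad y'(t_0)=y_B'(t_0)=P(t_0)\,y(t_0),\qquad y''(t_0)=\big(P(t_0)^2+P'(t_0)\big)\,y(t_0),$$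 where $$P(t)=\Big(\frac{e_2}{c_3(t)}\Big)^{1/3}\Big(1+\frac{e_1}{3e_2}\Big)-\frac{c_2(t)-c_3'(t)}{3c_3(t)}.$$
   Context: Systems. A first-order system $A$ is $a_1(t)y_A'(t)+a_0(t)y_A(t)=x_A(t)$ with $a_1(t)\neq0$, $a_i$ twice differentiable, initial value $y_A(t_0)$; a second-order system $B$ is $b_2(t)y_B''(t)+b_1(t)y_B'(t)+b_0(t)y_B(t)=x_B(t)$ with $b_2(t)\neq0$, $b_i$ once differentiable, initial values $y_B(t_0),y_B'(t_0)$; inputs are piecewise continuous on $[t_0,\infty)$. The cascade connection $AB$ is defined by $x_A=x$, $x_B=y_A$, output $y=y_B$; the cascade connection $BA$ by $x_B=x$, $x_A=y_B$, output $y=y_A$ (both with the same subsystem initial values $y_A(t_0),y_B(t_0),y_B'(t_0)$). $A$ and $B$ are a commutative pair if $AB$ and $BA$ have the same input-output relation (same output for every input and the given initial conditions). $C$ is decomposed into the commutative pair $A,B$ if $AB$ and $BA$ are commutative and both give the same output as $C$ for every input $x$ (with $C$'s initial values $y(t_0),y'(t_0),y''(t_0)$ corresponding to those of the subsystems in part (ii); with zero/unconstrained initial data in part (i), i.e. the differential equations coincide). $(\cdot)^{1/3}$ denotes the real cube root; primes denote derivatives in $t$. *)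

(* Defs.v *)
From Stdlib Require Import Reals.
From Coquelicot Require Import Coquelicot.
Open Scope R_scope.

Definition cbrt (x : R) : R :=
  if Rlt_dec 0 x then Rpower x (1/3)
  else if Rlt_dec x 0 then - Rpower (- x) (1/3) else 0.

(** Regularity of coefficient functions on [t0, oo) (two-sided derivatives
    at every point t >= t0). *)
Definition smooth_from (t0 : R) (f : R -> R) : Prop :=
  forall (n : nat) (t : R), t0 <= t -> ex_derive (Derive_n f n) t.
Definition diff1_from (t0 : R) (f : R -> R) : Prop :=
  forall t, t0 <= t -> ex_derive f t.
Definition diff2_from (t0 : R) (f : R -> R) : Prop :=
  forall t, t0 <= t -> ex_derive f t /\ ex_derive (Derive f) t.

(** Coefficients of the differential equation of the cascade AB,
    i.e. of  A(B y) = x  with  B y = b2 y'' + b1 y' + b0 y,  A u = a1 u' + a0 u. *)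
Definition AB3 (a1 a0 b2 b1 b0 : R -> R) (t : R) := a1 t * b2 t.
Definition AB2 (a1 a0 b2 b1 b0 : R -> R) (t : R) :=
  a1 t * (Derive b2 t + b1 t) + a0 t * b2 t.
Definition AB1 (a1 a0 b2 b1 b0 : R -> R) (t : R) :=
  a1 t * (Derive b1 t + b0 t) + a0 t * b1 t.
Definition AB0 (a1 a0 b2 b1 b0 : R -> R) (t : R) :=
  a1 t * Derive b0 t + a0 t * b0 t.

(** Coefficients of the differential equation of the cascade BA,
    i.e. of  B(A y) = x. *)
Definition BA3 (a1 a0 b2 b1 b0 : R -> R) (t : R) := b2 t * a1 t.
Definition BA2 (a1 a0 b2 b1 b0 : R -> R) (t : R) :=
  b2 t * (2 * Derive a1 t + a0 t) + b1 t * a1 t.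
Definition BA1 (a1 a0 b2 b1 b0 : R -> R) (t : R) :=
  b2 t * (Derive (Derive a1) t + 2 * Derive a0 t)
  + b1 t * (Derive a1 t + a0 t) + b0 t * a1 t.
Definition BA0 (a1 a0 b2 b1 b0 : R -> R) (t : R) :=
  b2 t * Derive (Derive a0) t + b1 t * Derive a0 t + b0 t * a0 t.

(** Part (i) notion: C is decomposed into the commutative pair A, B with
    unconstrained initial data, i.e. the differential equations of AB, of BA
    and of C coincide on [t0, oo). *)
Definition decomposed_eq (t0 : R) (c3 c2 c1 c0 a1 a0 b2 b1 b0 : R -> R) : Prop :=
  forall t, t0 <= t ->
    (AB3 a1 a0 b2 b1 b0 t = c3 t /\ AB2 a1 a0 b2 b1 b0 t = c2 t /\
     AB1 a1 a0 b2 b1 b0 t = c1 t /\ AB0 a1 a0 b2 b1 b0 t = c0 t) /\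
    (BA3 a1 a0 b2 b1 b0 t = c3 t /\ BA2 a1 a0 b2 b1 b0 t = c2 t /\
     BA1 a1 a0 b2 b1 b0 t = c1 t /\ BA0 a1 a0 b2 b1 b0 t = c0 t).

Definition a1f (e2 : R) (c3 : R -> R) (t : R) : R := cbrt (c3 t / e2).
Definition a0f (e2 e1 : R) (c3 c2 : R -> R) (t : R) : R :=
  (c2 t - Derive c3 t) / (3 * cbrt e2 * (cbrt (c3 t)) ^ 2) - e1 / (3 * e2).
Definition b2f (e2 : R) (c3 : R -> R) (t : R) : R := e2 * (a1f e2 c3 t) ^ 2.
Definition b1f (e2 e1 : R) (c3 c2 : R -> R) (t : R) : R :=
  e2 * (Derive (a1f e2 c3) t + 2 * a0f e2 e1 c3 c2 t) * a1f e2 c3 t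
  + e1 * a1f e2 c3 t.
Definition b0f (e2 e1 e0 : R) (c3 c2 : R -> R) (t : R) : R :=
  e2 * (Derive (a0f e2 e1 c3 c2) t * a1f e2 c3 t + (a0f e2 e1 c3 c2 t) ^ 2)
  + e1 * a0f e2 e1 c3 c2 t + e0.

Definition coeff_cond (t0 : R) (c3 c2 c1 c0 : R -> R) (e2 e1 e0 : R) : Prop :=
  forall t, t0 <= t ->
    c1 t = a1f e2 c3 t * Derive (b1f e2 e1 c3 c2) t
           + a1f e2 c3 t * b0f e2 e1 e0 c3 c2 t
           + a0f e2 e1 c3 c2 t * b1f e2 e1 c3 c2 t /\
    c0 t = a1f e2 c3 t * Derive (b0f e2 e1 e0 c3 c2) t
           + a0f e2 e1 c3 c2 t * b0f e2 e1 e0 c3 c2 t.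

Definition Pf (e2 e1 : R) (c3 c2 : R -> R) (t : R) : R :=
  cbrt (e2 / c3 t) * (1 + e1 / (3 * e2)) - (c2 t - Derive c3 t) / (3 * c3 t).

Definition pwc (t0 : R) (x : R -> R) : Prop :=
  forall T, t0 < T ->
    exists (n : nat) (s : nat -> R),
      s O = t0 /\ s n = T /\
      forall i, (i < n)%nat ->
        s i < s (S i) /\
        (forall u, s i < u < s (S i) -> continuous x u) /\
        (exists l : R, filterlim x (at_right (s i)) (locally l)) /\
        (exists l : R, filterlim x (at_left (s (S i))) (locally l)).

(** Solutions on [t0, oo) (Caratheodory / integral form, appropriate for
    piecewise continuous forcing), with prescribed initial values. *)
Definition sol1 (t0 : R) (a1 a0 x : R -> R) (y0 : R) (y : R -> R) : Prop :=
  y t0 = y0 /\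
  forall t, t0 <= t ->
    ex_RInt (fun s => (x s - a0 s * y s) / a1 s) t0 t /\
    y t = y0 + RInt (fun s => (x s - a0 s * y s) / a1 s) t0 t.

Definition sol2 (t0 : R) (b2 b1 b0 x : R -> R) (y0 y1 : R) (y : R -> R) : Prop :=
  exists z : R -> R,
    y t0 = y0 /\ z t0 = y1 /\
    forall t, t0 <= t ->
      ex_RInt z t0 t /\ y t = y0 + RInt z t0 t /\
      ex_RInt (fun s => (x s - b1 s * z s - b0 s * y s) / b2 s) t0 t /\
      z t = y1 + RInt (fun s => (x s - b1 s * z s - b0 s * y s) / b2 s) t0 t.

Definition sol3 (t0 : R) (c3 c2 c1 c0 x : R -> R) (y0 y1 y2 : R) (y : R -> R)
  : Prop :=
  exists z1 z2 : R -> R,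
    y t0 = y0 /\ z1 t0 = y1 /\ z2 t0 = y2 /\
    forall t, t0 <= t ->
      ex_RInt z1 t0 t /\ y t = y0 + RInt z1 t0 t /\
      ex_RInt z2 t0 t /\ z1 t = y1 + RInt z2 t0 t /\
      ex_RInt (fun s => (x s - c2 s * z2 s - c1 s * z1 s - c0 s * y s) / c3 s) t0 t /\
      z2 t = y2 + RInt (fun s => (x s - c2 s * z2 s - c1 s * z1 s - c0 s * y s) / c3 s) t0 t.

Definition outAB (t0 : R) (a1 a0 b2 b1 b0 : R -> R) (yA0 yB0 yB1 : R)
  (x y : R -> R) : Prop :=
  exists yA : R -> R, sol1 t0 a1 a0 x yA0 yA /\ sol2 t0 b2 b1 b0 yA yB0 yB1 y.
Definition outBA (t0 : R) (a1 a0 b2 b1 b0 : R -> R) (yA0 yB0 yB1 : R)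
  (x y : R -> R) : Prop :=
  exists yB : R -> R, sol2 t0 b2 b1 b0 x yB0 yB1 yB /\ sol1 t0 a1 a0 yB yA0 y.
Definition outC (t0 : R) (c3 c2 c1 c0 : R -> R) (y0 y1 y2 : R)
  (x y : R -> R) : Prop :=
  sol3 t0 c3 c2 c1 c0 x y0 y1 y2 y.

Definition decomposed_ic (t0 : R) (c3 c2 c1 c0 a1 a0 b2 b1 b0 : R -> R)
  (y0 y1 y2 yA0 yB0 yB1 : R) : Prop :=
  (forall x, pwc t0 x -> forall y,
     outAB t0 a1 a0 b2 b1 b0 yA0 yB0 yB1 x y <-> outBA t0 a1 a0 b2 b1 b0 yA0 yB0 yB1 x y) /\
  (forall x, pwc t0 x -> forall y,
     outAB t0 a1 a0 b2 b1 b0 yA0 yB0 yB1 x y <-> outC t0 c3 c2 c1 c0 y0 y1 y2 x y) /\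
  (forall x, pwc t0 x -> forall y,
     outBA t0 a1 a0 b2 b1 b0 yA0 yB0 yB1 x y <-> outC t0 c3 c2 c1 c0 y0 y1 y2 x y).

(* Main.v *)
Require Import Defs.
From Stdlib Require Import Reals Lra Lia.
From Coquelicot Require Import Coquelicot.
Open Scope R_scope.

Lemma cont_eps (g : R -> R) t : (forall eps, 0 < eps -> exists d, 0 < d /\ forall u, Rabs (u - t) < d -> Rabs (g u - g t) < eps) -> continuous g t.
Proof.
intros H. apply filterlim_locally. intros eps.
destruct (H eps (cond_pos eps)) as [d [Hd Hu]].
exists (mkposreal d Hd). intros u Hb. apply Hu. exact Hb.
Qed.

Lemma eps_cont (g : R -> R) t : continuous g t -> forall eps, 0 < eps -> exists d, 0 < d /\ forall u, Rabs (u - t) < d -> Rabs (g u - g t) < eps.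
Proof.
intros H eps He. 
destruct (proj1 (filterlim_locally g (g t)) H (mkposreal eps He)) as [d Hd].
exists d. split. apply cond_pos. intros u Hu. apply (Hd u). exact Hu.
Qed.

Lemma Derive_right (f g : R -> R) (t : R) :
  (forall s, t <= s -> f s = g s) -> Derive f t = Derive g t.
Proof.
intros H. unfold Derive, Lim. f_equal. apply Lim_seq_ext. intros n. simpl.
assert (Hp : 0 < / (INR n + 1)).
{ apply Rinv_0_lt_compat. pose proof (pos_INR n). lra. }
rewrite !H; try lra; try reflexivity.
Qed.

Lemma glue_is_derive (u v W : R -> R) t0 l :
  is_derive u t0 l -> is_derive v t0 l ->
  (forall s, s < t0 -> W s = u s) -> (forall s, t0 <= s -> W s = v s) ->
  u t0 = v t0 -> is_derive W t0 l.
Proof.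
intros Hu Hv HWu HWv Huv.
apply is_derive_Reals. apply is_derive_Reals in Hu. apply is_derive_Reals in Hv.
intros eps Heps.
destruct (Hu eps Heps) as [d1 H1]. destruct (Hv eps Heps) as [d2 H2].
assert (Hd : 0 < Rmin d1 d2) by (apply Rmin_pos; apply cond_pos).
exists (mkposreal _ Hd). intros h Hh Hlt. simpl in Hlt.
rewrite (HWv t0) by lra.
destruct (Rlt_or_le h 0) as [Hn|Hn].
- rewrite HWu by lra. rewrite <- Huv. apply H1; auto.
  apply Rlt_le_trans with (1 := Hlt). apply Rmin_l.
- rewrite HWv by lra. apply H2; auto.
  apply Rlt_le_trans with (1 := Hlt). apply Rmin_r.
Qed.

Lemma locally_gt (t0 t : R) : t0 < t -> locally t (fun s => t0 < s).
Proof.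
intros H. assert (Hp : 0 < t - t0) by lra. exists (mkposreal _ Hp).
intros s Hs. unfold ball in Hs; simpl in Hs. unfold AbsRing_ball, abs, minus, plus, opp in Hs; simpl in Hs.
apply Rabs_lt_between in Hs. lra.
Qed.

Lemma locally_lt (t0 t : R) : t < t0 -> locally t (fun s => s < t0).
Proof.
intros H. assert (Hp : 0 < t0 - t) by lra. exists (mkposreal _ Hp).
intros s Hs. unfold ball in Hs; simpl in Hs. unfold AbsRing_ball, abs, minus, plus, opp in Hs; simpl in Hs.
apply Rabs_lt_between in Hs. lra.
Qed.

Definition glue (t0 : R) (f g : R -> R) (s : R) : R :=
  if Rle_dec t0 s then f s
  else f t0 + g t0 * (s - t0) + Derive g t0 * (s - t0) ^ 2 / 2.

Lemma glue_prop (t0 : R) (f g : R -> R) :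
  (forall t, t0 <= t -> is_derive f t (g t)) ->
  (forall t, t0 <= t -> ex_derive g t) ->
  (forall t, t0 <= t -> glue t0 f g t = f t) /\ diff2_from t0 (glue t0 f g).
Proof.
intros Hf Hg.
set (F := glue t0 f g).
assert (HF1 : forall t, t0 <= t -> F t = f t).
{ intros t Ht. unfold F, glue. destruct (Rle_dec t0 t); [reflexivity|lra]. }
assert (HF2 : forall t, t < t0 -> F t = f t0 + g t0 * (t - t0) + Derive g t0 * (t - t0) ^ 2 / 2).
{ intros t Ht. unfold F, glue. destruct (Rle_dec t0 t); [lra|reflexivity]. }
assert (HD1 : forall t, t0 <= t -> Derive F t = g t).
{ intros t Ht. rewrite (Derive_right F f t).
  - apply is_derive_unique. apply Hf; auto.
  - intros s Hs. apply HF1. lra. }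
assert (HD2 : forall t, t < t0 -> Derive F t = g t0 + Derive g t0 * (t - t0)).
{ intros t Ht. rewrite (Derive_ext_loc F (fun s => f t0 + g t0 * (s - t0) + Derive g t0 * (s - t0) ^ 2 / 2)).
  - apply is_derive_unique. auto_derive; auto. field.
  - generalize (locally_lt t0 t Ht). apply filter_imp. intros s Hs. apply HF2; auto. }
split; [exact HF1|]. intros t Ht. destruct (Rle_lt_or_eq_dec _ _ Ht) as [Hlt|Heq].
- split.
  + exists (g t). apply is_derive_ext_loc with f; [|apply Hf; lra].
    generalize (locally_gt t0 t Hlt). apply filter_imp. intros s Hs. symmetry. apply HF1. lra.
  + exists (Derive g t). apply is_derive_ext_loc with g; [|apply Derive_correct; apply Hg; lra].
    generalize (locally_gt t0 t Hlt). apply filter_imp. intros s Hs. symmetry. apply HD1. lra.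
- subst t. split.
  + exists (g t0).
    apply glue_is_derive with (u := fun s => f t0 + g t0 * (s - t0) + Derive g t0 * (s - t0) ^ 2 / 2) (v := f).
    * auto_derive; auto. field.
    * apply Hf; lra.
    * exact HF2.
    * exact HF1.
    * field.
  + exists (Derive g t0).
    apply glue_is_derive with (u := fun s => g t0 + Derive g t0 * (s - t0)) (v := g).
    * auto_derive; auto. field.
    * apply Derive_correct, Hg; lra.
    * exact HD2.
    * exact HD1.
    * cbv beta; ring.
Qed.

Ltac eta_derive := repeat match goal with |- context [Derive (fun x => ?f x)] => change (Derive (fun x => f x)) with (Derive f) end.

Lemma is_derive_extR (f g : R -> R) x l : (forall t, f t = g t) -> is_derive f x l -> is_derive g x l.
Proof. apply is_derive_ext. Qed.

Lemma is_derive_ext_locR (f g : R -> R) x l : locally x (fun t => f t = g t) -> is_derive f x l -> is_derive g x l.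
Proof. apply is_derive_ext_loc. Qed.

Ltac nz := repeat first [ apply Rmult_integral_contrapositive_currified | apply pow_nonzero | apply Rinv_neq_0_compat | lra | assumption | (intro; lra) ].

Definition CW (t0 : R) (f : R -> R) : Prop :=
  forall t, t0 <= t -> continuous (fun s => f (Rmax t0 s)) t.

Lemma cont_Rmax (a t : R) : continuous (fun s => Rmax a s) t.
Proof.
apply cont_eps. intros eps He. exists eps. split; auto. intros u Hu.
unfold Rmax. destruct (Rle_dec a u); destruct (Rle_dec a t);
  apply Rle_lt_trans with (2 := Hu); apply Rabs_le_between; split; 
  try (apply Rabs_le_between in Hu); try lra;
  pose proof (Rabs_pos (u - t)); pose proof (Rle_abs (u - t)); pose proof (Rle_abs (-(u - t))); rewrite Rabs_Ropp in *; lra.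
Qed.

Lemma cont_Rmin (a t : R) : continuous (fun s => Rmin a s) t.
Proof.
apply cont_eps. intros eps He. exists eps. split; auto. intros u Hu.
pose proof (Rle_abs (u - t)); pose proof (Rle_abs (-(u - t))); rewrite Rabs_Ropp in *.
unfold Rmin. destruct (Rle_dec a u); destruct (Rle_dec a t);
  apply Rle_lt_trans with (2 := Hu); apply Rabs_le_between; split; lra.
Qed.

Lemma CW_of_cont t0 f : (forall t, t0 <= t -> continuous f t) -> CW t0 f.
Proof.
intros H t Ht. apply (continuous_comp (fun s => Rmax t0 s) f).
- apply cont_Rmax.
- rewrite Rmax_right by lra. apply H; auto.
Qed.

Lemma CW_of_diff t0 f : (forall t, t0 <= t -> ex_derive f t) -> CW t0 f.
Proof.
intros H. apply CW_of_cont. intros t Ht. apply (@ex_derive_continuous R_AbsRing R_NormedModule f t). auto.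
Qed.

Lemma CW_plus t0 f g : CW t0 f -> CW t0 g -> CW t0 (fun s => f s + g s).
Proof.
intros Hf Hg t Ht. apply (continuous_plus (fun s => f (Rmax t0 s)) (fun s => g (Rmax t0 s))); auto.
Qed.

Lemma CW_mult t0 f g : CW t0 f -> CW t0 g -> CW t0 (fun s => f s * g s).
Proof.
intros Hf Hg t Ht. apply (continuous_mult (fun s => f (Rmax t0 s)) (fun s => g (Rmax t0 s))); auto.
Qed.

Lemma CW_const t0 c : CW t0 (fun _ => c).
Proof. intros t Ht. apply continuous_const. Qed.

Lemma CW_ext t0 f g : (forall s, t0 <= s -> f s = g s) -> CW t0 f -> CW t0 g.
Proof.
intros He Hf t Ht. apply continuous_ext with (fun s => f (Rmax t0 s)).
- intros s. apply He. apply Rmax_l.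
- apply Hf; auto.
Qed.

Lemma CW_opp t0 f : CW t0 f -> CW t0 (fun s => - f s).
Proof.
intros Hf. apply CW_ext with (fun s => (-1) * f s).
- intros; ring.
- apply CW_mult; auto. apply CW_const.
Qed.

Lemma CW_minus t0 f g : CW t0 f -> CW t0 g -> CW t0 (fun s => f s - g s).
Proof.
intros Hf Hg. apply CW_plus; auto. apply CW_opp; auto.
Qed.

Lemma CW_inv t0 f : CW t0 f -> (forall s, t0 <= s -> f s <> 0) -> CW t0 (fun s => / f s).
Proof.
intros Hf Hn t Ht. apply (continuous_Rinv_comp (fun s => f (Rmax t0 s))); auto.
apply Hn. apply Rmax_l.
Qed.

Lemma CW_div t0 f g : CW t0 f -> CW t0 g -> (forall s, t0 <= s -> g s <> 0) -> CW t0 (fun s => f s / g s).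
Proof.
intros Hf Hg Hn. apply CW_mult; auto. apply CW_inv; auto.
Qed.

Lemma CW_interior t0 f t : CW t0 f -> t0 < t -> continuous f t.
Proof.
intros Hf Ht. apply continuous_ext_loc with (fun s => f (Rmax t0 s)).
- generalize (locally_gt t0 t Ht). apply filter_imp. intros s Hs. rewrite Rmax_right; auto; lra.
- apply Hf; lra.
Qed.

Lemma CW_eps t0 f t : CW t0 f -> t0 <= t -> forall eps, 0 < eps -> exists d, 0 < d /\
  forall s, t0 <= s -> Rabs (s - t) < d -> Rabs (f s - f t) < eps.
Proof.
intros Hf Ht eps He. destruct (eps_cont _ t (Hf t Ht) eps He) as [d [Hd H]].
exists d. split; auto. intros s Hs Hst. specialize (H s Hst).
rewrite !Rmax_right in H by lra. exact H.
Qed.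

Lemma CW_eq_at t0 f g : CW t0 f -> CW t0 g -> (forall s, t0 < s -> f s = g s) -> f t0 = g t0.
Proof.
intros Hf Hg He.
destruct (Req_dec (f t0) (g t0)) as [E|NE]; auto. exfalso.
set (eps := Rabs (f t0 - g t0) / 2).
assert (He0 : 0 < eps). { unfold eps. apply Rdiv_lt_0_compat; [|lra]. apply Rabs_pos_lt. lra. }
destruct (CW_eps t0 f t0 Hf (Rle_refl _) eps He0) as [d1 [Hd1 H1]].
destruct (CW_eps t0 g t0 Hg (Rle_refl _) eps He0) as [d2 [Hd2 H2]].
set (s := t0 + Rmin d1 d2 / 2).
assert (Hm : 0 < Rmin d1 d2) by (apply Rmin_pos; auto).
assert (Hs1 : Rabs (s - t0) < d1).
{ unfold s. rewrite Rabs_right by lra. pose proof (Rmin_l d1 d2). lra. }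
assert (Hs2 : Rabs (s - t0) < d2).
{ unfold s. rewrite Rabs_right by lra. pose proof (Rmin_r d1 d2). lra. }
assert (Hst : t0 < s) by (unfold s; lra).
specialize (H1 s (Rlt_le _ _ Hst) Hs1). specialize (H2 s (Rlt_le _ _ Hst) Hs2).
rewrite He in H1 by auto.
assert (Rabs (f t0 - g t0) <= Rabs (g s - f t0) + Rabs (g s - g t0)).
{ replace (f t0 - g t0) with (-(g s - f t0) + (g s - g t0)) by ring.
  eapply Rle_trans. apply Rabs_triang. rewrite Rabs_Ropp. lra. }
unfold eps in *. lra.
Qed.

Lemma CW_clamp t0 h a b : CW t0 h -> t0 <= a -> forall u, continuous (fun u => h (Rmax a (Rmin b u))) u.
Proof.
intros Hh Ha u.
apply continuous_ext with (fun u => h (Rmax t0 (Rmax a (Rmin b u)))).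
- intros v. rewrite Rmax_right; auto. eapply Rle_trans; [exact Ha|apply Rmax_l].
- apply (continuous_comp (fun u => Rmax a (Rmin b u)) (fun s => h (Rmax t0 s))).
  + apply (continuous_comp (fun u => Rmin b u) (fun s => Rmax a s)); [apply cont_Rmin|apply cont_Rmax].
  + apply Hh. eapply Rle_trans; [exact Ha|apply Rmax_l].
Qed.

Definition IntF (t0 : R) (F f : R -> R) : Prop :=
  forall t, t0 <= t -> ex_RInt f t0 t /\ F t = F t0 + RInt f t0 t.

Lemma ex_RInt_sub (f : R -> R) a b u v : ex_RInt f a b -> a <= u <= b -> a <= v <= b -> ex_RInt f u v.
Proof.
intros He Hu Hv.
assert (K : forall u v, a <= u <= b -> a <= v <= b -> u <= v -> ex_RInt f u v).
{ intros u' v' Hu' Hv' Huv. apply (@ex_RInt_Chasles_1 R_CompleteNormedModule f u' v' b). lra.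
  apply (@ex_RInt_Chasles_2 R_CompleteNormedModule f a u' b). lra. exact He. }
destruct (Rle_or_lt u v). apply K; auto. apply ex_RInt_swap. apply K; auto; lra.
Qed.

Lemma Int_CW t0 (F f : R -> R) : IntF t0 F f -> CW t0 F.
Proof.
intros HI t Ht.
destruct (HI (t + 1)) as [Hex _]; [lra|].
destruct (ex_RInt_ub f t0 (t + 1) Hex) as [M HM].
assert (HM' : forall u, t0 <= u <= t + 1 -> Rabs (f u) <= M).
{ intros u Hu. apply (HM u). rewrite Rmin_left by lra. rewrite Rmax_right by lra. exact Hu. }
assert (Hb : forall s, t0 <= s <= t + 1 -> Rabs (F s - F t) <= Rabs M * Rabs (s - t)).
{ intros s Hs.
  destruct (HI s) as [_ E1]; [lra|]. destruct (HI t) as [Et E2]; [lra|].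
  assert (Hts : ex_RInt f t s) by (apply ex_RInt_sub with t0 (t + 1); auto; lra).
  assert (E3 : RInt f t0 t + RInt f t s = RInt f t0 s) by (apply (RInt_Chasles f t0 t s); auto).
  replace (F s - F t) with (RInt f t s) by lra.
  destruct (Rle_or_lt t s) as [Hle|Hlt].
  - rewrite (Rabs_right (s - t)) by lra.
    eapply Rle_trans. apply abs_RInt_le_const with (M := M); auto.
    intros u Hu. apply HM'. lra.
    assert (M <= Rabs M) by apply Rle_abs. nra.
  - rewrite <- (opp_RInt_swap f s t) by (apply ex_RInt_swap; auto).
    change (opp (RInt f s t)) with (- RInt f s t). rewrite Rabs_Ropp.
    rewrite (Rabs_left (s - t)) by lra.
    eapply Rle_trans. apply abs_RInt_le_const with (M := M); auto; try lra.
    apply ex_RInt_swap; auto.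
    intros u Hu. apply HM'. lra.
    assert (M <= Rabs M) by apply Rle_abs. nra. }
apply cont_eps. intros eps He.
exists (Rmin 1 (eps / (Rabs M + 1))). split.
{ apply Rmin_pos. lra. apply Rdiv_lt_0_compat; auto. pose proof (Rabs_pos M); lra. }
intros u Hu. rewrite (Rmax_right t0 t) by lra.
assert (Hu1 : Rabs (u - t) < 1) by (eapply Rlt_le_trans; [exact Hu|apply Rmin_l]).
assert (Hu2 : Rabs (u - t) < eps / (Rabs M + 1)) by (eapply Rlt_le_trans; [exact Hu|apply Rmin_r]).
apply Rabs_lt_between in Hu1.
assert (Hs : t0 <= Rmax t0 u <= t + 1) by (split; [apply Rmax_l|unfold Rmax; destruct (Rle_dec t0 u); lra]).
assert (Hst : Rabs (Rmax t0 u - t) <= Rabs (u - t)).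
{ unfold Rmax. destruct (Rle_dec t0 u). lra. rewrite !Rabs_left1; lra. }
eapply Rle_lt_trans. apply Hb; auto.
pose proof (Rabs_pos M). pose proof (Rabs_pos (u - t)).
apply Rle_lt_trans with (Rabs M * Rabs (u - t)). apply Rmult_le_compat_l; auto.
apply Rle_lt_trans with ((Rabs M + 1) * Rabs (u - t)). nra.
apply Rmult_lt_compat_l with (r := Rabs M + 1) in Hu2; [|lra].
replace ((Rabs M + 1) * (eps / (Rabs M + 1))) with eps in Hu2 by (field; lra). exact Hu2.
Qed.

Lemma Int_deriv t0 (F f : R -> R) t : IntF t0 F f -> t0 < t -> continuous f t -> is_derive F t (f t).
Proof.
intros HI Ht Hc.
assert (H1 : is_derive (fun s => RInt f t0 s) t (f t)).
{ apply is_derive_RInt with (a := t0); auto.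
  generalize (locally_gt t0 t Ht). apply filter_imp. intros s Hs.
  apply RInt_correct. apply (HI s). lra. }
assert (H2 : is_derive (fun s => F t0 + RInt f t0 s) t (0 + f t)).
{ apply (is_derive_plus (fun _ => F t0) (fun s => RInt f t0 s) t 0 (f t)); auto. exact (@is_derive_const R_AbsRing R_NormedModule (F t0) t). }
rewrite Rplus_0_l in H2.
apply is_derive_ext_loc with (2 := H2).
generalize (locally_gt t0 t Ht). apply filter_imp. intros s Hs. symmetry. apply (HI s). lra.
Qed.

Lemma Int_ext_f t0 (F f g : R -> R) : (forall s, t0 <= s -> f s = g s) -> IntF t0 F f -> IntF t0 F g.
Proof.
intros He HI t Ht. destruct (HI t Ht) as [H1 H2]. split.
- apply ex_RInt_ext with f; auto. intros x Hx. rewrite Rmin_left in Hx by lra. apply He. lra.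
- rewrite H2. f_equal. apply RInt_ext. intros x Hx. rewrite Rmin_left in Hx by lra. apply He. lra.
Qed.

Lemma Int_ext_F t0 (F G f : R -> R) : (forall s, t0 <= s -> F s = G s) -> IntF t0 F f -> IntF t0 G f.
Proof.
intros He HI t Ht. destruct (HI t Ht) as [H1 H2]. split; auto.
rewrite <- !He; auto; lra.
Qed.

Lemma Int_of_deriv t0 (F f : R -> R) : (forall u, t0 <= u -> is_derive F u (f u) /\ continuous f u) -> IntF t0 F f.
Proof.
intros H t Ht.
assert (Hi : is_RInt f t0 t (minus (F t) (F t0))).
{ apply (@is_RInt_derive R_CompleteNormedModule F f t0 t); intros x Hx; rewrite Rmin_left in Hx by lra; rewrite Rmax_right in Hx by lra; apply H; lra. }
split. exists (minus (F t) (F t0)); auto.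
rewrite (is_RInt_unique _ _ _ _ Hi). unfold minus, plus, opp; simpl. ring.
Qed.

Lemma piece_FTC (F G g : R -> R) a b : a < b -> (forall u, continuous g u) ->
  continuous G a -> continuous G b -> (forall u, a <= u <= b -> G u = F u) ->
  (forall u, a < u < b -> is_derive F u (g u)) -> F b - F a = RInt g a b.
Proof.
intros Hab Hg HGa HGb HGF HD.
assert (Hi : forall u, is_derive (fun v => RInt g a v) u (g u)).
{ intros u. apply is_derive_RInt with (a := a); auto.
  apply filter_forall. intros v. apply RInt_correct. apply ex_RInt_continuous. intros; auto. }
assert (HDG : forall u, a < u < b -> is_derive (fun v => G v - RInt g a v) u 0).
{ intros u Hu.
  assert (HG : is_derive G u (g u)).
  { apply is_derive_ext_loc with F; [|apply HD; auto].
    generalize (filter_and _ _ (locally_gt a u (proj1 Hu)) (locally_lt b u (proj2 Hu))).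
    apply filter_imp. intros v Hv. symmetry. apply HGF. lra. }
  replace 0 with (minus (g u) (g u)) by (unfold minus, plus, opp; simpl; ring).
  apply (is_derive_minus G (fun v => RInt g a v)); auto. }
destruct (MVT_gen (fun v => G v - RInt g a v) a b (fun _ => 0)) as [c [_ Hc]].
- rewrite Rmin_left by lra. rewrite Rmax_right by lra. intros; apply HDG; auto.
- rewrite Rmin_left by lra. rewrite Rmax_right by lra. intros x Hx.
  apply continuity_pt_filterlim.
  apply (continuous_minus G (fun v => RInt g a v)).
  + destruct (Rle_lt_or_eq_dec _ _ (proj1 Hx)) as [H1|H1]; [|subst; auto].
    destruct (Rle_lt_or_eq_dec _ _ (proj2 Hx)) as [H2|H2]; [|subst; auto].
    assert (HG : is_derive G x (g x)).
    { apply is_derive_ext_loc with F; [|apply HD; auto].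
      generalize (filter_and _ _ (locally_gt a x H1) (locally_lt b x H2)).
      apply filter_imp. intros v Hv. symmetry. apply HGF. lra. }
    apply (@ex_derive_continuous R_AbsRing R_NormedModule G x). exists (g x); auto.
  + apply (@ex_derive_continuous R_AbsRing R_NormedModule (fun v => RInt g a v) x). exists (g x); auto.
- rewrite HGF in Hc by lra. rewrite HGF in Hc by lra.
  assert (Hz : RInt g a a = 0) by exact (RInt_point a g). rewrite Hz in Hc. lra.
Qed.

Lemma pwc_piece (x : R -> R) a b : a < b -> (forall u, a < u < b -> continuous x u) ->
  (exists l, filterlim x (at_right a) (locally l)) ->
  (exists l, filterlim x (at_left b) (locally l)) ->
  exists g : R -> R, (forall u, continuous g u) /\ (forall u, a < u < b -> g u = x u).
Proof.
intros Hab Hc [l1 Hl1] [l2 Hl2].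
exists (fun u => if Rle_dec u a then l1 else if Rle_dec b u then l2 else x u).
split.
2:{ intros u Hu. destruct (Rle_dec u a); [lra|]. destruct (Rle_dec b u); [lra|]. reflexivity. }
intros u.
destruct (Rlt_or_le u a) as [H1|H1].
{ apply continuous_ext_loc with (fun _ => l1); [|apply continuous_const].
  generalize (locally_lt a u H1). apply filter_imp. intros v Hv.
  destruct (Rle_dec v a); [reflexivity|lra]. }
destruct (Rle_lt_or_eq_dec _ _ H1) as [H2|H2].
2:{ subst u. apply cont_eps. intros eps He.
    destruct (proj1 (filterlim_locally x l1) Hl1 (mkposreal eps He)) as [d Hd].
    exists (Rmin d (b - a)). split. apply Rmin_pos. apply cond_pos. lra.
    intros v Hv. destruct (Rle_dec a a); [|lra].
    destruct (Rle_dec v a). rewrite Rminus_diag, Rabs_R0. lra.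
    assert (Hv' := Hv). apply Rabs_lt_between in Hv'.
    pose proof (Rmin_r d (b - a)). pose proof (Rmin_l d (b - a)).
    destruct (Rle_dec b v); [lra|].
    apply (Hd v). change (Rabs (v - a) < d). lra. lra. }
destruct (Rlt_or_le u b) as [H3|H3].
{ apply continuous_ext_loc with x; [|apply Hc; lra].
  generalize (filter_and _ _ (locally_gt a u H2) (locally_lt b u H3)). apply filter_imp. intros v Hv.
  destruct (Rle_dec v a); [lra|]. destruct (Rle_dec b v); [lra|]. reflexivity. }
destruct (Rle_lt_or_eq_dec _ _ H3) as [H4|H4].
2:{ subst u. apply cont_eps. intros eps He.
    destruct (proj1 (filterlim_locally x l2) Hl2 (mkposreal eps He)) as [d Hd].
    exists (Rmin d (b - a)). split. apply Rmin_pos. apply cond_pos. lra.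
    intros v Hv. destruct (Rle_dec b a); [lra|]. destruct (Rle_dec b b); [|lra].
    assert (Hv' := Hv). apply Rabs_lt_between in Hv'.
    pose proof (Rmin_r d (b - a)). pose proof (Rmin_l d (b - a)).
    destruct (Rle_dec v a); [lra|].
    destruct (Rle_dec b v). rewrite Rminus_diag, Rabs_R0. lra.
    apply (Hd v). change (Rabs (v - b) < d). lra. lra. }
apply continuous_ext_loc with (fun _ => l2); [|apply continuous_const].
generalize (locally_gt b u H4). apply filter_imp. intros v Hv.
destruct (Rle_dec v a); [lra|]. destruct (Rle_dec b v); [reflexivity|lra].
Qed.

Lemma FTC_pw t0 (F f x h k : R -> R) : pwc t0 x -> CW t0 F -> CW t0 h -> CW t0 k ->
  (forall u, t0 <= u -> f u = x u * h u + k u) ->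
  (forall u, t0 < u -> continuous x u -> is_derive F u (f u)) -> IntF t0 F f.
Proof.
intros Hx HF Hh Hk Hf HD t Ht.
destruct (Rle_lt_or_eq_dec _ _ Ht) as [Hlt|Heq].
2:{ subst t. split. apply ex_RInt_point.
    assert (Hz : RInt f t0 t0 = 0) by exact (RInt_point t0 f). rewrite Hz. ring. }
destruct (Hx t Hlt) as [n [s [Hs0 [Hsn Hpc]]]].
assert (Hmono : forall i, (i <= n)%nat -> t0 <= s i).
{ induction i; intros Hi. rewrite Hs0; lra.
  destruct (Hpc i) as [Hi' _]; [lia|]. specialize (IHi ltac:(lia)). lra. }
assert (Hmain : forall i, (i <= n)%nat -> ex_RInt f t0 (s i) /\ F (s i) = F t0 + RInt f t0 (s i)).
{ induction i; intros Hi.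
  - rewrite Hs0. split. apply ex_RInt_point.
    assert (Hz : RInt f t0 t0 = 0) by exact (RInt_point t0 f). rewrite Hz. ring.
  - destruct IHi as [IH1 IH2]; [lia|].
    destruct (Hpc i) as [Hlt' [Hc [Hl1 Hl2]]]; [lia|].
    destruct (pwc_piece x (s i) (s (S i)) Hlt' Hc Hl1 Hl2) as [gx [Hgx1 Hgx2]].
    assert (Hti : t0 <= s i) by (apply Hmono; lia).
    set (g := fun u => gx u * h (Rmax (s i) (Rmin (s (S i)) u)) + k (Rmax (s i) (Rmin (s (S i)) u))).
    assert (Hg : forall u, continuous g u).
    { intros u. unfold g. apply (continuous_plus (fun u => gx u * h (Rmax (s i) (Rmin (s (S i)) u)))).
      apply (continuous_mult gx (fun u => h (Rmax (s i) (Rmin (s (S i)) u)))); auto.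
      apply CW_clamp with t0; auto. apply CW_clamp with t0; auto. }
    assert (Hfg : forall u, s i < u < s (S i) -> f u = g u).
    { intros u Hu. unfold g. rewrite Hgx2 by auto. rewrite Rmin_right by lra. rewrite Rmax_right by lra.
      apply Hf. lra. }
    assert (Hex : ex_RInt f (s i) (s (S i))).
    { apply ex_RInt_ext with g. rewrite Rmin_left by lra. rewrite Rmax_right by lra.
      intros u Hu. symmetry. apply Hfg; auto.
      apply (@ex_RInt_continuous R_CompleteNormedModule). intros; auto. }
    assert (Hp : F (s (S i)) - F (s i) = RInt g (s i) (s (S i))).
    { apply (piece_FTC F (fun u => F (Rmax t0 u)) g (s i) (s (S i))).
      - exact Hlt'.
      - exact Hg.
      - apply HF; lra.
      - apply HF; lra.
      - intros u Hu. rewrite Rmax_right; auto. lra.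
      - intros u Hu. rewrite <- Hfg by auto. apply HD. lra. apply Hc; auto. }
    assert (Hr : RInt g (s i) (s (S i)) = RInt f (s i) (s (S i))).
    { apply RInt_ext. rewrite Rmin_left by lra. rewrite Rmax_right by lra.
      intros u Hu. symmetry. apply Hfg; auto. }
    split.
    + apply ex_RInt_Chasles with (s i); auto.
    + rewrite <- (RInt_Chasles f t0 (s i) (s (S i))) by auto.
      change (plus ?a ?b) with (a + b). lra. }
rewrite <- Hsn. apply Hmain. lia.
Qed.

Lemma filterlim_right_of_cont (x : R -> R) a : continuous x a -> filterlim x (at_right a) (locally (x a)).
Proof.
intros H. eapply filterlim_filter_le_1; [|exact H].
intros P HP. unfold at_right, within. eapply filter_imp; [|exact HP]. intros; auto.
Qed.

Lemma filterlim_left_of_cont (x : R -> R) a : continuous x a -> filterlim x (at_left a) (locally (x a)).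
Proof.
intros H. eapply filterlim_filter_le_1; [|exact H].
intros P HP. unfold at_left, within. eapply filter_imp; [|exact HP]. intros; auto.
Qed.

Lemma pwc_of_cont t0 (x : R -> R) : (forall u, t0 <= u -> continuous x u) -> pwc t0 x.
Proof.
intros H T HT. exists 1%nat, (fun i => match i with O => t0 | _ => T end).
split; [reflexivity|]. split; [reflexivity|].
intros i Hi. assert (i = O) by lia. subst i. simpl. split; [lra|]. split.
- intros u Hu. apply H. lra.
- split.
  + exists (x t0). apply filterlim_right_of_cont. apply H. lra.
  + exists (x T). apply filterlim_left_of_cont. apply H. lra.
Qed.

Lemma FTC_cont t0 (F f : R -> R) : CW t0 F -> CW t0 f ->
  (forall u, t0 < u -> is_derive F u (f u)) -> IntF t0 F f.
Proof.
intros HF Hf HD.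
apply FTC_pw with (x := fun _ => 0) (h := fun _ => 0) (k := f); auto.
- apply pwc_of_cont. intros; apply continuous_const.
- apply CW_const.
- intros; ring.
Qed.

Lemma Rpower_third_cube x : 0 < x -> Rpower x (1/3) ^ 3 = x.
Proof.
intros Hx. rewrite <- Rpower_pow by (unfold Rpower; apply exp_pos).
rewrite Rpower_mult. replace (1 / 3 * INR 3) with 1 by (simpl; field). apply Rpower_1; auto.
Qed.

Lemma cbrt_cube x : cbrt x ^ 3 = x.
Proof.
unfold cbrt. destruct (Rlt_dec 0 x). apply Rpower_third_cube; auto.
destruct (Rlt_dec x 0).
- replace ((- Rpower (- x) (1 / 3)) ^ 3) with (- (Rpower (- x) (1 / 3) ^ 3)) by ring.
  rewrite Rpower_third_cube by lra. ring.
- simpl. lra.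
Qed.

Lemma cube_inj a b : a ^ 3 = b ^ 3 -> a = b.
Proof.
intros H. destruct (Req_dec a b) as [E|NE]; auto. exfalso.
assert (H1 : (a - b) * (a * a + a * b + b * b) = 0).
{ replace ((a - b) * (a * a + a * b + b * b)) with (a^3 - b^3) by ring. lra. }
apply Rmult_integral in H1. destruct H1 as [H1|H1]; [lra|].
assert (Hb : (2*a+b)*(2*a+b) + 3*(b*b) = 0).
{ replace ((2*a+b)*(2*a+b) + 3*(b*b)) with (4 * (a * a + a * b + b * b)) by ring. lra. }
pose proof (Rle_0_sqr (2*a+b)). pose proof (Rle_0_sqr b). unfold Rsqr in *.
assert (Hbb : b * b = 0) by lra. apply Rmult_integral in Hbb. destruct Hbb as [Hbb|Hbb]; subst b;
assert (Haa : a * a = 0) by lra; apply Rmult_integral in Haa; lra.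
Qed.

Lemma cbrt_pow3 a : cbrt (a ^ 3) = a.
Proof. apply cube_inj. apply cbrt_cube. Qed.

Lemma cbrt_mult x y : cbrt (x * y) = cbrt x * cbrt y.
Proof. apply cube_inj. rewrite cbrt_cube. rewrite Rpow_mult_distr. rewrite !cbrt_cube. ring. Qed.

Lemma cbrt_nz x : x <> 0 -> cbrt x <> 0.
Proof. intros H E. apply H. rewrite <- (cbrt_cube x). rewrite E. ring. Qed.

Lemma cbrt_inv x : x <> 0 -> cbrt (/ x) = / cbrt x.
Proof.
intros H. apply cube_inj. rewrite cbrt_cube. rewrite pow_inv. rewrite cbrt_cube. reflexivity.
Qed.

Lemma cbrt_div x y : y <> 0 -> cbrt (x / y) = cbrt x / cbrt y.
Proof. intros H. unfold Rdiv. rewrite cbrt_mult, cbrt_inv; auto. Qed.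

Lemma ex_derive_cbrt x : x <> 0 -> ex_derive cbrt x.
Proof.
intros Hx. destruct (Rlt_or_le 0 x) as [Hp|Hn].
- exists (Derive (fun y => exp (1/3 * ln y)) x).
  apply is_derive_ext_loc with (fun y => exp (1/3 * ln y)).
  + generalize (locally_gt 0 x Hp). apply filter_imp. intros y Hy.
    unfold cbrt. destruct (Rlt_dec 0 y); [|lra]. reflexivity.
  + apply Derive_correct. auto_derive. auto.
- assert (Hn' : x < 0) by lra.
  exists (Derive (fun y => - exp (1/3 * ln (- y))) x).
  apply is_derive_ext_loc with (fun y => - exp (1/3 * ln (- y))).
  + generalize (locally_lt 0 x Hn'). apply filter_imp. intros y Hy.
    unfold cbrt. destruct (Rlt_dec 0 y); [lra|]. destruct (Rlt_dec y 0); [|lra]. reflexivity.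
  + apply Derive_correct. auto_derive. lra.
Qed.

Lemma sol1_iff t0 a1 a0 x y0 y :
  sol1 t0 a1 a0 x y0 y <-> y t0 = y0 /\ IntF t0 y (fun s => (x s - a0 s * y s) / a1 s).
Proof.
unfold sol1, IntF. split; intros [H1 H2]; split; auto; intros t Ht; destruct (H2 t Ht); split; auto.
rewrite H1; auto. rewrite <- H1; auto.
Qed.

Lemma sol2_iff t0 b2 b1 b0 x y0 y1 y :
  sol2 t0 b2 b1 b0 x y0 y1 y <-> exists z, y t0 = y0 /\ z t0 = y1 /\ IntF t0 y z /\
     IntF t0 z (fun s => (x s - b1 s * z s - b0 s * y s) / b2 s).
Proof.
unfold sol2, IntF. split.
- intros [z [H1 [H2 H3]]]. exists z. split; auto. split; auto. split.
  + intros t Ht. destruct (H3 t Ht) as [A [B _]]. split; auto. rewrite H1; auto.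
  + intros t Ht. destruct (H3 t Ht) as [_ [_ [C D]]]. split; auto. rewrite H2; auto.
- intros [z [H1 [H2 [H3 H4]]]]. exists z. split; auto. split; auto.
  intros t Ht. destruct (H3 t Ht) as [A B]. destruct (H4 t Ht) as [C D].
  rewrite <- H1, <- H2. auto.
Qed.

Lemma sol3_iff t0 c3 c2 c1 c0 x y0 y1 y2 y :
  sol3 t0 c3 c2 c1 c0 x y0 y1 y2 y <-> exists z1 z2, y t0 = y0 /\ z1 t0 = y1 /\ z2 t0 = y2 /\
     IntF t0 y z1 /\ IntF t0 z1 z2 /\
     IntF t0 z2 (fun s => (x s - c2 s * z2 s - c1 s * z1 s - c0 s * y s) / c3 s).
Proof.
unfold sol3, IntF. split.
- intros [z1 [z2 [H1 [H2 [H3 H4]]]]]. exists z1, z2. do 3 (split; auto). split; [|split].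
  + intros t Ht. destruct (H4 t Ht) as [A [B _]]. split; auto. rewrite H1; auto.
  + intros t Ht. destruct (H4 t Ht) as [_ [_ [C [D _]]]]. split; auto. rewrite H2; auto.
  + intros t Ht. destruct (H4 t Ht) as [_ [_ [_ [_ [E G]]]]]. split; auto. rewrite H3; auto.
- intros [z1 [z2 [H1 [H2 [H3 [H4 [H5 H6]]]]]]]. exists z1, z2. do 3 (split; auto).
  intros t Ht. destruct (H4 t Ht) as [A B]. destruct (H5 t Ht) as [C D]. destruct (H6 t Ht) as [E G].
  rewrite <- H1, <- H2, <- H3. repeat split; auto.
Qed.

Lemma nice_exists t0 (c3 c2 c1 c0 : R -> R)
  (Hc3s : smooth_from t0 c3) (Hc2s : smooth_from t0 c2)
  (Hc3 : forall t, t0 <= t -> c3 t <> 0) e2 e1 e0 (He2 : e2 <> 0)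
  (Hcc : coeff_cond t0 c3 c2 c1 c0 e2 e1 e0) :
  exists A1 A0 B2 B1 B0 : R -> R,
   diff2_from t0 A1 /\ diff2_from t0 A0 /\ diff1_from t0 B2 /\ diff1_from t0 B1 /\ diff1_from t0 B0 /\
   (forall t, t0 <= t -> A1 t <> 0) /\ (forall t, t0 <= t -> B2 t <> 0) /\
   decomposed_eq t0 c3 c2 c1 c0 A1 A0 B2 B1 B0 /\
   (forall t, t0 <= t -> A1 t = a1f e2 c3 t /\ A0 t = a0f e2 e1 c3 c2 t /\ B2 t = b2f e2 c3 t /\
        B1 t = b1f e2 e1 c3 c2 t /\ B0 t = b0f e2 e1 e0 c3 c2 t) /\
   (forall t, B2 t = e2 * A1 t ^ 2 /\ B1 t = e2 * (Derive A1 t + 2 * A0 t) * A1 t + e1 * A1 t /\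
        B0 t = e2 * (Derive A0 t * A1 t + A0 t ^ 2) + e1 * A0 t + e0).
Proof.
remember (cbrt e2) as ce eqn:Hcedef.
assert (Hce : ce <> 0) by (subst; apply cbrt_nz; auto).
assert (Hce3 : ce ^ 3 = e2) by (subst; apply cbrt_cube).
remember (fun s => cbrt (c3 s)) as q eqn:Hqdef.
assert (Hq3 : forall s, q s ^ 3 = c3 s) by (intros; subst; apply cbrt_cube).
assert (Hqnz : forall t, t0 <= t -> q t <> 0) by (intros; subst; apply cbrt_nz; auto).
assert (Hc3d : forall t, t0 <= t -> ex_derive c3 t) by (intros t Ht; exact (Hc3s 0%nat t Ht)).
assert (Hc3dd : forall t, t0 <= t -> ex_derive (Derive c3) t) by (intros t Ht; exact (Hc3s 1%nat t Ht)).
assert (Hc3ddd : forall t, t0 <= t -> ex_derive (Derive (Derive c3)) t) by (intros t Ht; exact (Hc3s 2%nat t Ht)).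
assert (Hc2d : forall t, t0 <= t -> ex_derive c2 t) by (intros t Ht; exact (Hc2s 0%nat t Ht)).
assert (Hc2dd : forall t, t0 <= t -> ex_derive (Derive c2) t) by (intros t Ht; exact (Hc2s 1%nat t Ht)).
assert (Hqd : forall t, t0 <= t -> ex_derive q t).
{ intros t Ht. subst q. apply (ex_derive_comp cbrt c3). apply ex_derive_cbrt; auto. auto. }
remember (fun s => Derive c3 s / (3 * q s ^ 2)) as Dq eqn:HDqdef.
assert (HDq : forall t, t0 <= t -> Derive q t = Dq t).
{ intros t Ht. rewrite HDqdef.
  assert (E : Derive c3 t = Derive (fun s => q s ^ 3) t).
  { apply Derive_ext. intros s. symmetry. apply Hq3. }
  assert (E2 : Derive (fun s => q s ^ 3) t = 3 * q t ^ 2 * Derive q t).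
  { apply is_derive_unique. auto_derive. apply Hqd; auto. simpl. eta_derive. ring. }
  rewrite E, E2. field. apply Hqnz; auto. }
assert (HDqd : forall t, t0 <= t -> ex_derive Dq t).
{ intros t Ht. rewrite HDqdef. auto_derive. repeat split; auto. apply Hqnz in Ht. simpl. 
  intro H. apply Ht. assert (q t * q t = 0) by lra. apply Rmult_integral in H0. tauto. }
assert (Ha1f : forall s, a1f e2 c3 s = q s / ce).
{ intros s. unfold a1f. rewrite cbrt_div by auto. subst. reflexivity. }
assert (Ha0f : forall s, a0f e2 e1 c3 c2 s = (c2 s - Derive c3 s) / (3 * ce * q s ^ 2) - e1 / (3 * e2)).
{ intros s. unfold a0f. subst. reflexivity. }
assert (Ha1d : forall t, t0 <= t -> is_derive (a1f e2 c3) t (Dq t / ce)).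
{ intros t Ht. apply (is_derive_extR (fun s => q s / ce)). intros; rewrite Ha1f; auto.
  auto_derive; repeat split; auto. eta_derive. rewrite HDq by auto. field. auto. }
assert (Hg1d : forall t, t0 <= t -> ex_derive (fun s => Dq s / ce) t).
{ intros t Ht. auto_derive; repeat split; auto. }
destruct (glue_prop t0 (a1f e2 c3) (fun s => Dq s / ce) Ha1d Hg1d) as [HA1e HA1d].
remember (glue t0 (a1f e2 c3) (fun s => Dq s / ce)) as A1 eqn:HA1def. clear HA1def.
remember (fun s => ((Derive c2 s - Derive (Derive c3) s) * (3 * ce * q s ^ 2) - (c2 s - Derive c3 s) * (3 * ce * (2 * q s * Dq s))) / (3 * ce * q s ^ 2) ^ 2) as g0 eqn:Hg0def.
assert (Hq2 : forall t, t0 <= t -> 3 * ce * q t ^ 2 <> 0).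
{ intros t Ht. apply Hqnz in Ht. nz. }
assert (Ha0d : forall t, t0 <= t -> is_derive (a0f e2 e1 c3 c2) t (g0 t)).
{ intros t Ht. apply (is_derive_extR (fun s => (c2 s - Derive c3 s) / (3 * ce * q s ^ 2) - e1 / (3 * e2))).
  intros; rewrite Ha0f; auto.
  auto_derive; repeat split; auto; try (apply Hq2; auto).
  eta_derive. rewrite HDq by auto. rewrite Hg0def. pose proof (Hqnz t Ht). field. nz. }
assert (Hg0d : forall t, t0 <= t -> ex_derive g0 t).
{ intros t Ht. rewrite Hg0def. pose proof (Hqnz t Ht). auto_derive; repeat split; auto; nz. }
destruct (glue_prop t0 (a0f e2 e1 c3 c2) g0 Ha0d Hg0d) as [HA0e HA0d].
remember (glue t0 (a0f e2 e1 c3 c2) g0) as A0 eqn:HA0def. clear HA0def.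
assert (HDA1 : forall t, t0 <= t -> Derive A1 t = Derive (a1f e2 c3) t).
{ intros t Ht. apply Derive_right. intros s Hs. apply HA1e. lra. }
assert (HDA0 : forall t, t0 <= t -> Derive A0 t = Derive (a0f e2 e1 c3 c2) t).
{ intros t Ht. apply Derive_right. intros s Hs. apply HA0e. lra. }
assert (HDA1v : forall t, t0 <= t -> Derive A1 t = Dq t / ce).
{ intros t Ht. rewrite HDA1 by auto. apply is_derive_unique. apply Ha1d; auto. }
remember (fun s => e2 * A1 s ^ 2) as B2 eqn:HB2def.
remember (fun s => e2 * (Derive A1 s + 2 * A0 s) * A1 s + e1 * A1 s) as B1 eqn:HB1def.
remember (fun s => e2 * (Derive A0 s * A1 s + A0 s ^ 2) + e1 * A0 s + e0) as B0 eqn:HB0def.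
assert (HBe : forall t, t0 <= t -> B2 t = b2f e2 c3 t /\ B1 t = b1f e2 e1 c3 c2 t /\ B0 t = b0f e2 e1 e0 c3 c2 t).
{ intros t Ht. subst B2 B1 B0. unfold b2f, b1f, b0f.
  rewrite HDA1, HDA0, HA1e, HA0e by auto. auto. }
assert (HDB1 : forall t, t0 <= t -> Derive B1 t = Derive (b1f e2 e1 c3 c2) t).
{ intros t Ht. apply Derive_right. intros s Hs. apply HBe. lra. }
assert (HDB0 : forall t, t0 <= t -> Derive B0 t = Derive (b0f e2 e1 e0 c3 c2) t).
{ intros t Ht. apply Derive_right. intros s Hs. apply HBe. lra. }
assert (HA1nz : forall t, t0 <= t -> A1 t <> 0).
{ intros t Ht. rewrite HA1e, Ha1f by auto. pose proof (Hqnz t Ht). unfold Rdiv. nz. }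
assert (HB2nz : forall t, t0 <= t -> B2 t <> 0).
{ intros t Ht. subst B2. pose proof (HA1nz t Ht). nz. }
assert (HD2 : forall t, t0 <= t -> Derive B2 t = e2 * (2 * A1 t * Derive A1 t)).
{ intros t Ht. subst B2. apply is_derive_unique. destruct (HA1d t Ht).
  auto_derive; auto. eta_derive. simpl. field. }
assert (HD1 : forall t, t0 <= t -> Derive B1 t = e2 * (Derive (Derive A1) t + 2 * Derive A0 t) * A1 t
   + e2 * (Derive A1 t + 2 * A0 t) * Derive A1 t + e1 * Derive A1 t).
{ intros t Ht. subst B1. apply is_derive_unique. destruct (HA1d t Ht). destruct (HA0d t Ht).
  auto_derive; repeat split; auto. eta_derive. field. }
assert (HD0 : forall t, t0 <= t -> Derive B0 t = e2 * (Derive (Derive A0) t * A1 t + Derive A0 t * Derive A1 t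
   + 2 * A0 t * Derive A0 t) + e1 * Derive A0 t).
{ intros t Ht. subst B0. apply is_derive_unique. destruct (HA1d t Ht). destruct (HA0d t Ht).
  auto_derive; repeat split; auto. eta_derive. simpl. field. }
exists A1, A0, B2, B1, B0.
split; [exact HA1d|]. split; [exact HA0d|].
split. { intros t Ht. subst B2. destruct (HA1d t Ht). auto_derive; auto. }
split. { intros t Ht. subst B1. destruct (HA1d t Ht). destruct (HA0d t Ht). auto_derive; repeat split; auto. }
split. { intros t Ht. subst B0. destruct (HA1d t Ht). destruct (HA0d t Ht). auto_derive; repeat split; auto. }
split; [exact HA1nz|]. split; [exact HB2nz|].
split.
2:{ split.
    - intros t Ht. destruct (HBe t Ht) as [? [? ?]]. repeat split; auto.
    - intros t. subst. repeat split; reflexivity. }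
intros t Ht.
destruct (Hcc t Ht) as [Hc1 Hc0].
rewrite <- HDB1 in Hc1 by auto. rewrite <- HDB0 in Hc0 by auto.
rewrite <- HA1e, <- HA0e in Hc1, Hc0 by auto.
rewrite <- (proj1 (proj2 (HBe t Ht))), <- (proj2 (proj2 (HBe t Ht))) in Hc1.
rewrite <- (proj2 (proj2 (HBe t Ht))) in Hc0.
assert (Hc2v : c2 t = (A0 t + e1 / (3 * e2)) * (3 * ce * q t ^ 2) + Dq t * (3 * q t ^ 2)).
{ rewrite HA0e, Ha0f by auto. rewrite HDqdef. pose proof (Hqnz t Ht). field. nz. }
assert (Hc3v : c3 t = q t ^ 3) by (rewrite Hq3; auto).
assert (HA1v : A1 t = q t / ce) by (rewrite HA1e, Ha1f; auto).
assert (HB2v : B2 t = e2 * A1 t ^ 2) by (subst; auto).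
assert (HB1v : B1 t = e2 * (Derive A1 t + 2 * A0 t) * A1 t + e1 * A1 t) by (subst; auto).
assert (HB0v : B0 t = e2 * (Derive A0 t * A1 t + A0 t ^ 2) + e1 * A0 t + e0) by (subst; auto).
pose proof (Hqnz t Ht) as Hqt.
unfold AB3, AB2, AB1, AB0, BA3, BA2, BA1, BA0.
rewrite Hc1, Hc0, Hc2v, Hc3v.
rewrite HD2, HD1, HD0 by auto. rewrite HB2v, HB1v, HB0v. rewrite HDA1v by auto. rewrite HA1v.
rewrite <- Hce3.
repeat split; field; nz.
Qed.

Lemma const_from t0 (k : R -> R) : (forall t, t0 <= t -> is_derive k t 0) -> forall t, t0 <= t -> k t = k t0.
Proof.
intros H t Ht.
destruct (MVT_gen k t0 t (fun _ => 0)) as [c [_ Hc]].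
- rewrite Rmin_left, Rmax_right by lra. intros x Hx. apply H; lra.
- rewrite Rmin_left, Rmax_right by lra. intros x Hx. apply continuity_pt_filterlim.
  apply (@ex_derive_continuous R_AbsRing R_NormedModule k x). exists 0. apply H; lra.
- lra.
Qed.

Lemma part1_fwd t0 (c3 c2 c1 c0 : R -> R) (Hc3 : forall t, t0 <= t -> c3 t <> 0)
  (a1 a0 b2 b1 b0 : R -> R) :
  diff2_from t0 a1 -> diff2_from t0 a0 -> diff1_from t0 b2 -> diff1_from t0 b1 -> diff1_from t0 b0 ->
  (forall t, t0 <= t -> a1 t <> 0) -> (forall t, t0 <= t -> b2 t <> 0) ->
  decomposed_eq t0 c3 c2 c1 c0 a1 a0 b2 b1 b0 ->
  exists e2 e1 e0 : R, e2 <> 0 /\ coeff_cond t0 c3 c2 c1 c0 e2 e1 e0.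
Proof.
intros Ha1d Ha0d Hb2d Hb1d Hb0d Ha1nz Hb2nz Hdec.
assert (Hk : forall t, t0 <= t -> a1 t * Derive b2 t = 2 * b2 t * Derive a1 t).
{ intros t Ht. destruct (Hdec t Ht) as [[_ [H1 _]] [_ [H2 _]]].
  unfold AB2, BA2 in *. rewrite <- H2 in H1. lra. }
assert (Hkd : forall t, t0 <= t -> is_derive (fun s => b2 s / a1 s ^ 2) t 0).
{ intros t Ht. pose proof (Ha1nz t Ht). destruct (Ha1d t Ht). pose proof (Hb2d t Ht).
  auto_derive; repeat split; auto; try nz. eta_derive.
  assert (E : Derive b2 t = 2 * b2 t * Derive a1 t / a1 t) by (rewrite <- Hk by auto; field; auto).
  rewrite E. field. auto. }
remember (b2 t0 / a1 t0 ^ 2) as e2 eqn:He2def.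
assert (He2 : e2 <> 0) by (rewrite He2def; pose proof (Ha1nz t0 (Rle_refl _)); pose proof (Hb2nz t0 (Rle_refl _)); unfold Rdiv; nz).
assert (Hb2v : forall t, t0 <= t -> b2 t = e2 * a1 t ^ 2).
{ intros t Ht. pose proof (const_from t0 _ Hkd t Ht). cbv beta in H. rewrite <- He2def in H. rewrite <- H.
  pose proof (Ha1nz t Ht). field. auto. }
assert (Hc3v : forall t, t0 <= t -> c3 t = e2 * a1 t ^ 3).
{ intros t Ht. destruct (Hdec t Ht) as [[H _] _]. unfold AB3 in H. rewrite <- H, Hb2v by auto. ring. }
assert (Ha1v : forall t, t0 <= t -> a1 t = a1f e2 c3 t).
{ intros t Ht. unfold a1f. replace (c3 t / e2) with (a1 t ^ 3). rewrite cbrt_pow3; auto.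
  rewrite Hc3v by auto. field. auto. }
assert (Hm1 : forall t, t0 <= t -> a1 t * Derive b1 t = b2 t * (Derive (Derive a1) t + 2 * Derive a0 t) + b1 t * Derive a1 t).
{ intros t Ht. destruct (Hdec t Ht) as [[_ [_ [H1 _]]] [_ [_ [H2 _]]]].
  unfold AB1, BA1 in *. rewrite <- H2 in H1. lra. }
assert (Hmd : forall t, t0 <= t -> is_derive (fun s => b1 s / a1 s - e2 * (Derive a1 s + 2 * a0 s)) t 0).
{ intros t Ht. pose proof (Ha1nz t Ht). destruct (Ha1d t Ht). destruct (Ha0d t Ht). pose proof (Hb1d t Ht).
  auto_derive; repeat split; auto; try nz. eta_derive.
  assert (E : Derive b1 t = (b2 t * (Derive (Derive a1) t + 2 * Derive a0 t) + b1 t * Derive a1 t) / a1 t)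
    by (rewrite <- Hm1 by auto; field; auto).
  rewrite E, Hb2v by auto. field. auto. }
remember (b1 t0 / a1 t0 - e2 * (Derive a1 t0 + 2 * a0 t0)) as e1 eqn:He1def.
assert (Hb1v : forall t, t0 <= t -> b1 t = e2 * (Derive a1 t + 2 * a0 t) * a1 t + e1 * a1 t).
{ intros t Ht. pose proof (const_from t0 _ Hmd t Ht). cbv beta in H. rewrite <- He1def in H. rewrite <- H.
  pose proof (Ha1nz t Ht). field. auto. }
assert (Hn1 : forall t, t0 <= t -> a1 t * Derive b0 t = b2 t * Derive (Derive a0) t + b1 t * Derive a0 t).
{ intros t Ht. destruct (Hdec t Ht) as [[_ [_ [_ H1]]] [_ [_ [_ H2]]]].
  unfold AB0, BA0 in *. rewrite <- H2 in H1. lra. }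
assert (Hnd : forall t, t0 <= t -> is_derive (fun s => b0 s - e2 * (Derive a0 s * a1 s + a0 s ^ 2) - e1 * a0 s) t 0).
{ intros t Ht. pose proof (Ha1nz t Ht). destruct (Ha1d t Ht). destruct (Ha0d t Ht). pose proof (Hb0d t Ht).
  auto_derive; repeat split; auto; try nz. eta_derive.
  assert (E : Derive b0 t = (b2 t * Derive (Derive a0) t + b1 t * Derive a0 t) / a1 t)
    by (rewrite <- Hn1 by auto; field; auto).
  rewrite E, Hb2v, Hb1v by auto. field. auto. }
remember (b0 t0 - e2 * (Derive a0 t0 * a1 t0 + a0 t0 ^ 2) - e1 * a0 t0) as e0 eqn:He0def.
assert (Hb0v : forall t, t0 <= t -> b0 t = e2 * (Derive a0 t * a1 t + a0 t ^ 2) + e1 * a0 t + e0).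
{ intros t Ht. pose proof (const_from t0 _ Hnd t Ht). cbv beta in H. rewrite <- He0def in H. rewrite <- H. ring. }
assert (Ha0v : forall t, t0 <= t -> a0 t = a0f e2 e1 c3 c2 t).
{ intros t Ht. unfold a0f.
  assert (Hq : cbrt (c3 t) = cbrt e2 * a1 t) by (rewrite Hc3v, cbrt_mult, cbrt_pow3; auto).
  assert (HDc3 : Derive c3 t = Derive a1 t * b2 t + a1 t * Derive b2 t).
  { rewrite (Derive_right c3 (fun s => a1 s * b2 s)).
    - apply Derive_mult. apply Ha1d; auto. apply Hb2d; auto.
    - intros s Hs. destruct (Hdec s ltac:(lra)) as [[H _] _]. unfold AB3 in H. auto. }
  assert (HDb2 : Derive b2 t = 2 * b2 t * Derive a1 t / a1 t) by (rewrite <- Hk by auto; pose proof (Ha1nz t Ht); field; auto).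
  destruct (Hdec t Ht) as [_ [_ [Hc2 _]]]. unfold BA2 in Hc2.
  rewrite Hq, HDc3, HDb2, <- Hc2, Hb1v, Hb2v by auto.
  pose proof (Ha1nz t Ht). assert (Hce : cbrt e2 <> 0) by (apply cbrt_nz; auto).
  assert (E2 : e2 = cbrt e2 ^ 3) by (rewrite cbrt_cube; auto).
  remember (cbrt e2) as ce. rewrite E2. field. nz. }
exists e2, e1, e0. split; auto.
assert (HDa1 : forall s, t0 <= s -> Derive (a1f e2 c3) s = Derive a1 s).
{ intros s Hs. apply Derive_right. intros u Hu. symmetry. apply Ha1v. lra. }
assert (HDa0 : forall s, t0 <= s -> Derive (a0f e2 e1 c3 c2) s = Derive a0 s).
{ intros s Hs. apply Derive_right. intros u Hu. symmetry. apply Ha0v. lra. }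
assert (Hb1f : forall s, t0 <= s -> b1f e2 e1 c3 c2 s = b1 s).
{ intros s Hs. unfold b1f. rewrite HDa1, <- Ha1v, <- Ha0v, Hb1v by auto. reflexivity. }
assert (Hb0f : forall s, t0 <= s -> b0f e2 e1 e0 c3 c2 s = b0 s).
{ intros s Hs. unfold b0f. rewrite HDa0, <- Ha1v, <- Ha0v, Hb0v by auto. reflexivity. }
intros t Ht.
rewrite (Derive_right (b1f e2 e1 c3 c2) b1 t) by (intros; apply Hb1f; lra).
rewrite (Derive_right (b0f e2 e1 e0 c3 c2) b0 t) by (intros; apply Hb0f; lra).
rewrite Hb1f, Hb0f, <- Ha1v, <- Ha0v by auto.
destruct (Hdec t Ht) as [[_ [_ [H1 H0]]] _]. unfold AB1, AB0 in *.
split; [rewrite <- H1 | rewrite <- H0]; ring.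
Qed.

Opaque CW.

Definition NiceH (t0 : R) (c3 c2 c1 c0 A1 A0 B2 B1 B0 : R -> R) : Prop :=
  diff2_from t0 A1 /\ diff2_from t0 A0 /\ diff1_from t0 B2 /\ diff1_from t0 B1 /\ diff1_from t0 B0 /\
  (forall t, t0 <= t -> A1 t <> 0) /\ (forall t, t0 <= t -> B2 t <> 0) /\
  decomposed_eq t0 c3 c2 c1 c0 A1 A0 B2 B1 B0 /\
  (forall t, t0 <= t -> continuous c3 t /\ continuous c2 t /\ continuous c1 t /\ continuous c0 t) /\
  (forall t, t0 <= t -> c3 t <> 0).

Lemma cont_of_lin t0 (f x h k : R -> R) u : t0 < u -> continuous x u -> CW t0 h -> CW t0 k ->
  (forall s, t0 <= s -> f s = x s * h s + k s) -> continuous f u.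
Proof.
intros Hu Hx Hh Hk Hf.
apply continuous_ext_loc with (fun s => x s * h s + k s).
- generalize (locally_gt t0 u Hu). apply filter_imp. intros s Hs. symmetry. apply Hf. lra.
- apply (continuous_plus (fun s => x s * h s) k).
  apply (continuous_mult x h); auto. apply (CW_interior t0); auto. apply (CW_interior t0); auto.
Qed.

Lemma cont_CW_lin t0 (f h k : R -> R) u : t0 < u -> CW t0 h -> CW t0 k ->
  (forall s, t0 <= s -> f s = h s + k s) -> continuous f u.
Proof.
intros Hu Hh Hk Hf. apply (cont_of_lin t0 f (fun _ => 1) h k u); auto.
apply continuous_const. intros; rewrite Hf; auto; ring.
Qed.

Ltac get_nice H :=
  let HA1d := fresh "HA1d" in let HA0d := fresh "HA0d" in let HB2d := fresh "HB2d" in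
  let HB1d := fresh "HB1d" in let HB0d := fresh "HB0d" in let HA1nz := fresh "HA1nz" in
  let HB2nz := fresh "HB2nz" in let Hdec := fresh "Hdec" in let Hcc := fresh "Hcc" in
  let Hc3nz := fresh "Hc3nz" in
  destruct H as [HA1d [HA0d [HB2d [HB1d [HB0d [HA1nz [HB2nz [Hdec [Hcc Hc3nz]]]]]]]]].

Lemma nice_CW t0 c3 c2 c1 c0 A1 A0 B2 B1 B0 : NiceH t0 c3 c2 c1 c0 A1 A0 B2 B1 B0 ->
  CW t0 A1 /\ CW t0 A0 /\ CW t0 (Derive A1) /\ CW t0 (Derive A0) /\ CW t0 B2 /\ CW t0 B1 /\ CW t0 B0 /\
  CW t0 c3 /\ CW t0 c2 /\ CW t0 c1 /\ CW t0 c0.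
Proof.
intros H. get_nice H.
repeat split; try (apply CW_of_diff; intros t Ht; first [apply HA1d | apply HA0d | apply HB2d | apply HB1d | apply HB0d]; auto);
  apply CW_of_cont; intros t Ht; apply Hcc; auto.
Qed.

Ltac cw := repeat (first [ assumption | apply CW_const | apply CW_plus | apply CW_minus | apply CW_mult | apply CW_opp | apply CW_div | apply CW_inv ]).

Lemma C_to_AB t0 (c3 c2 c1 c0 A1 A0 B2 B1 B0 : R -> R) y0 y1 y2 yA0 yB0 yB1 (x y : R -> R) :
  NiceH t0 c3 c2 c1 c0 A1 A0 B2 B1 B0 -> y0 = yB0 -> y1 = yB1 ->
  B2 t0 * y2 + B1 t0 * y1 + B0 t0 * y0 = yA0 -> pwc t0 x ->
  outC t0 c3 c2 c1 c0 y0 y1 y2 x y -> outAB t0 A1 A0 B2 B1 B0 yA0 yB0 yB1 x y.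
Proof.
intros HN E0 E1 E2 Hx HC.
pose proof (nice_CW _ _ _ _ _ _ _ _ _ _ HN) as [CA1 [CA0 [CDA1 [CDA0 [CB2 [CB1 [CB0 [Cc3 [Cc2 [Cc1 Cc0]]]]]]]]]].
get_nice HN.
unfold outC in HC. apply sol3_iff in HC. destruct HC as [z1 [z2 [Hy0 [Hz10 [Hz20 [I1 [I2 I3]]]]]]].
assert (Cy : CW t0 y) by (apply Int_CW with z1; auto).
assert (Cz1 : CW t0 z1) by (apply Int_CW with z2; auto).
assert (Cz2 : CW t0 z2) by (eapply Int_CW; eauto).
exists (fun s => B2 s * z2 s + B1 s * z1 s + B0 s * y s). split.
- apply sol1_iff. split.
  + rewrite Hy0, Hz10, Hz20. lra.
  + apply FTC_pw with x (fun s => / A1 s) (fun s => - (A0 s * (B2 s * z2 s + B1 s * z1 s + B0 s * y s)) / A1 s); auto.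
    * cw.
    * cw.
    * cw.
    * intros u Hu. field. auto.
    * intros u Hu Hxu.
      assert (dz2 : is_derive z2 u ((x u - c2 u * z2 u - c1 u * z1 u - c0 u * y u) / c3 u)).
      { apply (Int_deriv t0 z2 (fun s => (x s - c2 s * z2 s - c1 s * z1 s - c0 s * y s) / c3 s)); [exact I3 | lra | ].
        apply (cont_of_lin t0 _ x (fun s => / c3 s) (fun s => - (c2 s * z2 s + c1 s * z1 s + c0 s * y s) / c3 s)); [lra | exact Hxu | cw | cw | ].
        intros s Hs. field. auto. }
      assert (dz1 : is_derive z1 u (z2 u)) by (apply (Int_deriv t0); [eassumption | lra | apply (CW_interior t0); [assumption | lra]]).
      assert (dy : is_derive y u (z1 u)) by (apply (Int_deriv t0); [eassumption | lra | apply (CW_interior t0); [assumption | lra]]).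
      assert (Hu' : t0 <= u) by lra.
      destruct (Hdec u Hu') as [[H3 [H2 [H1 H0]]] _]. unfold AB3, AB2, AB1, AB0 in *.
      pose proof (HA1nz u Hu'). pose proof (HB2nz u Hu').
      auto_derive; repeat split; try (eexists; eassumption); auto.
      eta_derive. rewrite (is_derive_unique _ _ _ dz2), (is_derive_unique _ _ _ dz1), (is_derive_unique _ _ _ dy).
      rewrite <- H3, <- H2, <- H1, <- H0. field. auto.
- apply sol2_iff. exists z1. split; [rewrite Hy0; auto|]. split; [rewrite Hz10; auto|]. split; auto.
  apply Int_ext_f with z2; auto. intros s Hs. field. auto.
Qed.

Lemma AB_to_C t0 (c3 c2 c1 c0 A1 A0 B2 B1 B0 : R -> R) y0 y1 y2 yA0 yB0 yB1 (x y : R -> R) :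
  NiceH t0 c3 c2 c1 c0 A1 A0 B2 B1 B0 -> y0 = yB0 -> y1 = yB1 ->
  B2 t0 * y2 + B1 t0 * y1 + B0 t0 * y0 = yA0 -> pwc t0 x ->
  outAB t0 A1 A0 B2 B1 B0 yA0 yB0 yB1 x y -> outC t0 c3 c2 c1 c0 y0 y1 y2 x y.
Proof.
intros HN E0 E1 E2 Hx HAB.
pose proof (nice_CW _ _ _ _ _ _ _ _ _ _ HN) as [CA1 [CA0 [CDA1 [CDA0 [CB2 [CB1 [CB0 [Cc3 [Cc2 [Cc1 Cc0]]]]]]]]]].
get_nice HN.
destruct HAB as [yA [HA HB]]. apply sol1_iff in HA. destruct HA as [HyA0 IA].
apply sol2_iff in HB. destruct HB as [z [Hy0 [Hz0 [Iy Iz]]]].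
assert (CyA : CW t0 yA) by (eapply Int_CW; eauto).
assert (Cy : CW t0 y) by (eapply Int_CW; eauto).
assert (Cz : CW t0 z) by (eapply Int_CW; eauto).
assert (Cg : CW t0 (fun s => (yA s - B1 s * z s - B0 s * y s) / B2 s)) by cw.
unfold outC. apply sol3_iff.
exists z, (fun s => (yA s - B1 s * z s - B0 s * y s) / B2 s).
split; [rewrite Hy0; auto|]. split; [rewrite Hz0; auto|]. split.
{ cbv beta. rewrite HyA0, Hz0, Hy0. rewrite <- E0, <- E1, <- E2. field. apply HB2nz; lra. }
split; auto. split; auto.
apply FTC_pw with x (fun s => / c3 s)
  (fun s => - (c2 s * ((yA s - B1 s * z s - B0 s * y s) / B2 s) + c1 s * z s + c0 s * y s) / c3 s); auto.
- cw.
- cw.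
- intros u Hu. field. auto.
- intros u Hu Hxu.
  assert (Hu' : t0 <= u) by lra.
  assert (dyA : is_derive yA u ((x u - A0 u * yA u) / A1 u)).
  { apply (Int_deriv t0 yA (fun s => (x s - A0 s * yA s) / A1 s)); [exact IA | lra | ].
    apply (cont_of_lin t0 _ x (fun s => / A1 s) (fun s => - (A0 s * yA s) / A1 s)); [lra | exact Hxu | cw | cw | ].
    intros s Hs. field. auto. }
  assert (dz : is_derive z u ((yA u - B1 u * z u - B0 u * y u) / B2 u)).
  { apply (Int_deriv t0 z (fun s => (yA s - B1 s * z s - B0 s * y s) / B2 s)); [exact Iz | lra | ].
    apply (CW_interior t0); [exact Cg | lra]. }
  assert (dy : is_derive y u (z u)) by (apply (Int_deriv t0); [eassumption | lra | apply (CW_interior t0); [assumption | lra]]).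
  destruct (Hdec u Hu') as [[H3 [H2 [H1 H0]]] _]. unfold AB3, AB2, AB1, AB0 in *.
  pose proof (HA1nz u Hu'). pose proof (HB2nz u Hu').
  auto_derive; repeat split; try (eexists; eassumption); auto.
  eta_derive. rewrite (is_derive_unique _ _ _ dyA), (is_derive_unique _ _ _ dz), (is_derive_unique _ _ _ dy).
  rewrite <- H3, <- H2, <- H1, <- H0. field. auto.
Qed.


Opaque CW.

Lemma C_to_BA t0 (c3 c2 c1 c0 A1 A0 B2 B1 B0 : R -> R) y0 y1 y2 yA0 yB0 yB1 (x y : R -> R) :
  NiceH t0 c3 c2 c1 c0 A1 A0 B2 B1 B0 -> y0 = yA0 ->
  A1 t0 * y1 + A0 t0 * y0 = yB0 ->
  Derive A1 t0 * y1 + A1 t0 * y2 + Derive A0 t0 * y0 + A0 t0 * y1 = yB1 -> pwc t0 x ->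
  outC t0 c3 c2 c1 c0 y0 y1 y2 x y -> outBA t0 A1 A0 B2 B1 B0 yA0 yB0 yB1 x y.
Proof.
intros HN E0 E1 E2 Hx HC.
pose proof (nice_CW _ _ _ _ _ _ _ _ _ _ HN) as [CA1 [CA0 [CDA1 [CDA0 [CB2 [CB1 [CB0 [Cc3 [Cc2 [Cc1 Cc0]]]]]]]]]].
get_nice HN.
unfold outC in HC. apply sol3_iff in HC. destruct HC as [z1 [z2 [Hy0 [Hz10 [Hz20 [I1 [I2 I3]]]]]]].
assert (Cy : CW t0 y) by (apply Int_CW with z1; auto).
assert (Cz1 : CW t0 z1) by (apply Int_CW with z2; auto).
assert (Cz2 : CW t0 z2) by (eapply Int_CW; eauto).
exists (fun s => A1 s * z1 s + A0 s * y s). split.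
- apply sol2_iff. exists (fun s => Derive A1 s * z1 s + A1 s * z2 s + Derive A0 s * y s + A0 s * z1 s).
  split. { cbv beta. rewrite Hy0, Hz10. auto. }
  split. { cbv beta. rewrite Hy0, Hz10, Hz20. auto. }
  split.
  + apply FTC_cont; [cw | cw | ].
    intros u Hu. assert (Hu' : t0 <= u) by lra.
    assert (dz1 : is_derive z1 u (z2 u)) by (apply (Int_deriv t0); [eassumption | lra | apply (CW_interior t0); [assumption | lra]]).
    assert (dy : is_derive y u (z1 u)) by (apply (Int_deriv t0); [eassumption | lra | apply (CW_interior t0); [assumption | lra]]).
    destruct (HA1d u Hu'). destruct (HA0d u Hu').
    auto_derive; repeat split; try (eexists; eassumption); auto.
    eta_derive. rewrite (is_derive_unique _ _ _ dz1), (is_derive_unique _ _ _ dy). ring.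
  + apply FTC_pw with x (fun s => / B2 s)
      (fun s => - (B1 s * (Derive A1 s * z1 s + A1 s * z2 s + Derive A0 s * y s + A0 s * z1 s)
                  + B0 s * (A1 s * z1 s + A0 s * y s)) / B2 s); auto.
    * cw.
    * cw.
    * cw.
    * intros u Hu. field. auto.
    * intros u Hu Hxu. assert (Hu' : t0 <= u) by lra.
      assert (dz2 : is_derive z2 u ((x u - c2 u * z2 u - c1 u * z1 u - c0 u * y u) / c3 u)).
      { apply (Int_deriv t0 z2 (fun s => (x s - c2 s * z2 s - c1 s * z1 s - c0 s * y s) / c3 s)); [exact I3 | lra | ].
        apply (cont_of_lin t0 _ x (fun s => / c3 s) (fun s => - (c2 s * z2 s + c1 s * z1 s + c0 s * y s) / c3 s)); [lra | exact Hxu | cw | cw | ].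
        intros s Hs. field. auto. }
      assert (dz1 : is_derive z1 u (z2 u)) by (apply (Int_deriv t0); [eassumption | lra | apply (CW_interior t0); [assumption | lra]]).
      assert (dy : is_derive y u (z1 u)) by (apply (Int_deriv t0); [eassumption | lra | apply (CW_interior t0); [assumption | lra]]).
      destruct (HA1d u Hu'). destruct (HA0d u Hu').
      destruct (Hdec u Hu') as [_ [K3 [K2 [K1 K0]]]]. unfold BA3, BA2, BA1, BA0 in *.
      pose proof (HA1nz u Hu'). pose proof (HB2nz u Hu').
      auto_derive; repeat split; try (eexists; eassumption); auto.
      eta_derive. rewrite (is_derive_unique _ _ _ dz2), (is_derive_unique _ _ _ dz1), (is_derive_unique _ _ _ dy).
      rewrite <- K3, <- K2, <- K1, <- K0. field. auto.
- apply sol1_iff. split. rewrite Hy0; auto.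
  apply Int_ext_f with z1; auto. intros s Hs. field. auto.
Qed.

Lemma BA_to_C t0 (c3 c2 c1 c0 A1 A0 B2 B1 B0 : R -> R) y0 y1 y2 yA0 yB0 yB1 (x y : R -> R) :
  NiceH t0 c3 c2 c1 c0 A1 A0 B2 B1 B0 -> y0 = yA0 ->
  A1 t0 * y1 + A0 t0 * y0 = yB0 ->
  Derive A1 t0 * y1 + A1 t0 * y2 + Derive A0 t0 * y0 + A0 t0 * y1 = yB1 -> pwc t0 x ->
  outBA t0 A1 A0 B2 B1 B0 yA0 yB0 yB1 x y -> outC t0 c3 c2 c1 c0 y0 y1 y2 x y.
Proof.
intros HN E0 E1 E2 Hx HBA.
pose proof (nice_CW _ _ _ _ _ _ _ _ _ _ HN) as [CA1 [CA0 [CDA1 [CDA0 [CB2 [CB1 [CB0 [Cc3 [Cc2 [Cc1 Cc0]]]]]]]]]].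
get_nice HN.
destruct HBA as [yB [HB HA]]. apply sol2_iff in HB. destruct HB as [w [HyB0 [Hw0 [IyB Iw]]]].
apply sol1_iff in HA. destruct HA as [Hy0 Iy].
assert (CyB : CW t0 yB) by (eapply Int_CW; eauto).
assert (Cw : CW t0 w) by (eapply Int_CW; eauto).
assert (Cy : CW t0 y) by (eapply Int_CW; eauto).
remember (fun s => (yB s - A0 s * y s) / A1 s) as z1 eqn:Hz1.
assert (Ez1 : forall s, z1 s = (yB s - A0 s * y s) / A1 s) by (intros; rewrite Hz1; reflexivity).
assert (Cz1 : CW t0 z1) by (rewrite Hz1; cw).
assert (Cz2 : CW t0 (fun s => (w s - Derive A0 s * y s - A0 s * z1 s - Derive A1 s * z1 s) / A1 s)) by cw.
assert (dy : forall u, t0 < u -> is_derive y u (z1 u)).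
{ intros u Hu. apply (Int_deriv t0); [eassumption | lra | apply (CW_interior t0); [assumption | lra]]. }
assert (dyB : forall u, t0 < u -> is_derive yB u (w u)).
{ intros u Hu. apply (Int_deriv t0); [eassumption | lra | apply (CW_interior t0); [assumption | lra]]. }
assert (dz1 : forall u, t0 < u -> is_derive z1 u ((w u - Derive A0 u * y u - A0 u * z1 u - Derive A1 u * z1 u) / A1 u)).
{ intros u Hu. assert (Hu' : t0 <= u) by lra. pose proof (HA1nz u Hu').
  destruct (HA1d u Hu'). destruct (HA0d u Hu').
  apply (is_derive_extR (fun s => (yB s - A0 s * y s) / A1 s)); [intros; rewrite Ez1; reflexivity|].
  specialize (dy u Hu). specialize (dyB u Hu).
  auto_derive; repeat split; try (eexists; eassumption); auto.
  eta_derive. rewrite (is_derive_unique _ _ _ dy), (is_derive_unique _ _ _ dyB), Ez1. field. auto. }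
unfold outC. apply sol3_iff.
exists z1, (fun s => (w s - Derive A0 s * y s - A0 s * z1 s - Derive A1 s * z1 s) / A1 s).
assert (Hz10 : z1 t0 = y1).
{ rewrite Ez1, HyB0, Hy0, <- E1, <- E0. field. apply HA1nz; lra. }
split; [rewrite Hy0; auto|]. split; [exact Hz10|]. split.
{ cbv beta. rewrite Hz10, Hw0, Hy0, <- E2, <- E0. field. apply HA1nz; lra. }
split; [apply Int_ext_f with (2 := Iy); intros; rewrite Ez1; reflexivity|].
split.
- apply FTC_cont; auto.
- apply FTC_pw with x (fun s => / c3 s)
    (fun s => - (c2 s * ((w s - Derive A0 s * y s - A0 s * z1 s - Derive A1 s * z1 s) / A1 s) + c1 s * z1 s + c0 s * y s) / c3 s); auto.
  + cw.
  + cw.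
  + intros u Hu. field. auto.
  + intros u Hu Hxu. assert (Hu' : t0 <= u) by lra.
    assert (dw : is_derive w u ((x u - B1 u * w u - B0 u * yB u) / B2 u)).
    { apply (Int_deriv t0 w (fun s => (x s - B1 s * w s - B0 s * yB s) / B2 s)); [exact Iw | lra | ].
      apply (cont_of_lin t0 _ x (fun s => / B2 s) (fun s => - (B1 s * w s + B0 s * yB s) / B2 s)); [lra | exact Hxu | cw | cw | ].
      intros s Hs. field. auto. }
    specialize (dz1 u Hu). specialize (dy u Hu).
    destruct (HA1d u Hu'). destruct (HA0d u Hu').
    destruct (Hdec u Hu') as [_ [K3 [K2 [K1 K0]]]]. unfold BA3, BA2, BA1, BA0 in *.
    pose proof (HA1nz u Hu'). pose proof (HB2nz u Hu').
    assert (EyB : yB u = A1 u * z1 u + A0 u * y u) by (rewrite Ez1; field; auto).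
    auto_derive; repeat split; try (eexists; eassumption); auto.
    eta_derive. rewrite (is_derive_unique _ _ _ dz1), (is_derive_unique _ _ _ dy), (is_derive_unique _ _ _ dw).
    rewrite EyB. rewrite <- K3, <- K2, <- K1, <- K0. field. auto.
Qed.

Opaque CW.

Lemma CW_poly t0 (f : R -> R) : (forall u, ex_derive f u) -> CW t0 f.
Proof. intros H. apply CW_of_diff. intros; auto. Qed.

Lemma part2_nice t0 (c3 c2 c1 c0 A1 A0 B2 B1 B0 : R -> R) e2 e1 e0 :
  NiceH t0 c3 c2 c1 c0 A1 A0 B2 B1 B0 ->
  (forall t, B2 t = e2 * A1 t ^ 2 /\ B1 t = e2 * (Derive A1 t + 2 * A0 t) * A1 t + e1 * A1 t /\
        B0 t = e2 * (Derive A0 t * A1 t + A0 t ^ 2) + e1 * A0 t + e0) ->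
  forall y0 y1 y2 yA0 yB0 yB1 : R, y0 <> 0 ->
  (decomposed_ic t0 c3 c2 c1 c0 A1 A0 B2 B1 B0 y0 y1 y2 yA0 yB0 yB1 <->
   e2 + e1 + e0 = 1 /\ yA0 = y0 /\ yB0 = y0 /\
   y1 = (1 - A0 t0) / A1 t0 * y0 /\ yB1 = (1 - A0 t0) / A1 t0 * y0 /\
   y2 = (((1 - A0 t0) / A1 t0) ^ 2 + Derive (fun s => (1 - A0 s) / A1 s) t0) * y0).
Proof.
intros HN HBf y0 y1 y2 yA0 yB0 yB1 Hy0.
assert (HN' := HN).
pose proof (nice_CW _ _ _ _ _ _ _ _ _ _ HN) as [CA1 [CA0 [CDA1 [CDA0 [CB2 [CB1 [CB0 [Cc3 [Cc2 [Cc1 Cc0]]]]]]]]]].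
get_nice HN'.
assert (Ht0 : t0 <= t0) by lra.
pose proof (HA1nz t0 Ht0) as Ha1. destruct (HA1d t0 Ht0) as [Ha1d Ha1dd]. destruct (HA0d t0 Ht0) as [Ha0d Ha0dd].
assert (HP' : Derive (fun s => (1 - A0 s) / A1 s) t0 = (- Derive A0 t0 * A1 t0 - (1 - A0 t0) * Derive A1 t0) / A1 t0 ^ 2).
{ apply is_derive_unique. auto_derive; repeat split; auto. eta_derive. field. auto. }
rewrite HP'.
destruct (HBf t0) as [Hb2 [Hb1 Hb0]].
remember (A1 t0) as a1. remember (A0 t0) as a0. remember (Derive A1 t0) as d1. remember (Derive A0 t0) as d0.
set (P := (1 - a0) / a1).
set (P' := (- d0 * a1 - (1 - a0) * d1) / a1 ^ 2).
assert (F1 : a1 * (P * y0) + a0 * y0 = y0) by (unfold P; field; auto).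
assert (F2 : d1 * (P * y0) + a1 * ((P ^ 2 + P') * y0) + d0 * y0 + a0 * (P * y0) = P * y0) by (unfold P, P'; field; auto).
assert (F3 : B2 t0 * ((P ^ 2 + P') * y0) + B1 t0 * (P * y0) + B0 t0 * y0 = (e2 + e1 + e0) * y0).
{ rewrite Hb2, Hb1, Hb0. repeat (rewrite <- Heqa1 || rewrite <- Heqa0 || rewrite <- Heqd1 || rewrite <- Heqd0). unfold P, P'. field. auto. }
split.
-
  intros [D1 [D2 D3]].
  remember (fun s => y1 + y2 * (s - t0)) as z1 eqn:Heqz1.
  remember (fun s => y0 + y1 * (s - t0) + y2 * (s - t0) ^ 2 / 2) as y eqn:Heqy.
  remember (fun s => c2 s * y2 + c1 s * z1 s + c0 s * y s) as x eqn:Heqx.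
  assert (Hyd : forall u, is_derive y u (z1 u)) by (intros u; rewrite Heqy, Heqz1; auto_derive; auto; field).
  assert (Hz1d : forall u, is_derive z1 u y2) by (intros u; rewrite Heqz1; auto_derive; auto; field).
  assert (Cy : CW t0 y) by (apply CW_poly; intros u; exists (z1 u); auto).
  assert (Cz1 : CW t0 z1) by (apply CW_poly; intros u; exists y2; auto).
  assert (Hxc : forall u, t0 <= u -> continuous x u).
  { intros u Hu. destruct (Hcc u Hu) as [_ [K2 [K1 K0]]]. rewrite Heqx.
    apply (continuous_plus (fun s => c2 s * y2 + c1 s * z1 s) (fun s => c0 s * y s)).
    apply (continuous_plus (fun s => c2 s * y2) (fun s => c1 s * z1 s)).
    apply (continuous_mult c2 (fun _ => y2)); auto. apply continuous_const.
    apply (continuous_mult c1 z1); auto. apply (@ex_derive_continuous R_AbsRing R_NormedModule). exists y2; auto.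
    apply (continuous_mult c0 y); auto. apply (@ex_derive_continuous R_AbsRing R_NormedModule). exists (z1 u); auto. }
  assert (Hx : pwc t0 x) by (apply pwc_of_cont; auto).
  assert (HC : outC t0 c3 c2 c1 c0 y0 y1 y2 x y).
  { unfold outC. apply sol3_iff. exists z1, (fun _ => y2).
    split. rewrite Heqy. field. split. rewrite Heqz1. ring. split. reflexivity.
    split. apply Int_of_deriv. intros u Hu. split; auto. apply (@ex_derive_continuous R_AbsRing R_NormedModule). exists y2; auto.
    split. apply Int_of_deriv. intros u Hu. split; auto. apply continuous_const.
    apply Int_ext_f with (fun _ => 0).
    - intros s Hs. rewrite Heqx. field. auto.
    - apply Int_of_deriv. intros u Hu. split. apply (@is_derive_const R_AbsRing R_NormedModule). apply continuous_const. }
  assert (HAB := proj2 (D2 x Hx y) HC).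
  assert (HBA := proj2 (D3 x Hx y) HC).
  destruct HBA as [yB [HB HA]]. apply sol2_iff in HB. destruct HB as [w [HyB0 [Hw0 [IyB Iw]]]].
  apply sol1_iff in HA. destruct HA as [Hy0' Iy].
  assert (CyB : CW t0 yB) by (eapply Int_CW; eauto).
  assert (Cw : CW t0 w) by (eapply Int_CW; eauto).
  assert (Ev : forall s, t0 < s -> yB s = A1 s * z1 s + A0 s * y s).
  { intros s Hs. assert (Hs' : t0 <= s) by lra. pose proof (HA1nz s Hs').
    assert (H1 : is_derive y s ((yB s - A0 s * y s) / A1 s)).
    { apply (Int_deriv t0 y (fun s => (yB s - A0 s * y s) / A1 s)); [exact Iy | lra |].
      apply (CW_interior t0); [cw | lra]. }
    assert (H2 := is_derive_unique _ _ _ H1). rewrite (is_derive_unique _ _ _ (Hyd s)) in H2.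
    rewrite H2. field. auto. }
  assert (Eb : yB t0 = A1 t0 * z1 t0 + A0 t0 * y t0).
  { apply (CW_eq_at t0 yB (fun s => A1 s * z1 s + A0 s * y s)); auto. cw. }
  assert (Ec : w t0 = Derive A1 t0 * z1 t0 + A1 t0 * y2 + Derive A0 t0 * y t0 + A0 t0 * z1 t0).
  { apply (CW_eq_at t0 w (fun s => Derive A1 s * z1 s + A1 s * y2 + Derive A0 s * y s + A0 s * z1 s)); auto. cw.
    intros s Hs. assert (Hs' : t0 <= s) by lra.
    assert (H1 : is_derive yB s (w s)).
    { apply (Int_deriv t0); [eassumption | lra | apply (CW_interior t0); [assumption | lra]]. }
    assert (H2 : is_derive yB s (Derive A1 s * z1 s + A1 s * y2 + Derive A0 s * y s + A0 s * z1 s)).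
    { apply (is_derive_ext_locR (fun s => A1 s * z1 s + A0 s * y s)).
      generalize (locally_gt t0 s Hs). apply filter_imp. intros v Hv. symmetry. apply Ev; auto.
      destruct (HA1d s Hs'). destruct (HA0d s Hs').
      assert (ey : ex_derive y s) by (exists (z1 s); auto). assert (ez1 : ex_derive z1 s) by (exists y2; auto).
      auto_derive; repeat split; auto.
      eta_derive. rewrite (is_derive_unique _ _ _ (Hyd s)), (is_derive_unique _ _ _ (Hz1d s)). ring. }
    rewrite <- (is_derive_unique _ _ _ H1). apply (is_derive_unique _ _ _ H2). }
  destruct HAB as [yA [HA HB]]. apply sol1_iff in HA. destruct HA as [HyA0 IA].
  apply sol2_iff in HB. destruct HB as [z [Hyb0 [Hz0 [Iy2 Iz]]]].
  assert (CyA : CW t0 yA) by (eapply Int_CW; eauto).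
  assert (Cz : CW t0 z) by (eapply Int_CW; eauto).
  assert (Ezz : forall s, t0 < s -> z s = z1 s).
  { intros s Hs. 
    assert (H1 : is_derive y s (z s)).
    { apply (Int_deriv t0); [eassumption | lra | apply (CW_interior t0); [assumption | lra]]. }
    rewrite <- (is_derive_unique _ _ _ H1). apply (is_derive_unique _ _ _ (Hyd s)). }
  assert (Ee : z t0 = z1 t0) by (apply (CW_eq_at t0); auto).
  assert (Ef : (yA t0 - B1 t0 * z t0 - B0 t0 * y t0) / B2 t0 = y2).
  { apply (CW_eq_at t0 (fun s => (yA s - B1 s * z s - B0 s * y s) / B2 s) (fun _ => y2)); [cw | cw |].
    intros s Hs.
    assert (H1 : is_derive z s ((yA s - B1 s * z s - B0 s * y s) / B2 s)).
    { apply (Int_deriv t0 z (fun s => (yA s - B1 s * z s - B0 s * y s) / B2 s)); [exact Iz | lra |].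
      apply (CW_interior t0); [cw | lra]. }
    assert (H2 : is_derive z s y2).
    { apply (is_derive_ext_locR z1). generalize (locally_gt t0 s Hs). apply filter_imp. intros v Hv. symmetry. apply Ezz; auto.
      apply Hz1d. }
    cbv beta. rewrite <- (is_derive_unique _ _ _ H1). apply (is_derive_unique _ _ _ H2). }
  assert (Hyt0 : y t0 = y0) by (rewrite Heqy; field).
  assert (Hz1t0 : z1 t0 = y1) by (rewrite Heqz1; ring).
  rewrite Hyt0, Hz1t0 in *. rewrite <- Heqa1, <- Heqa0, <- Heqd1, <- Heqd0 in *.
  assert (Hb2t := HB2nz t0 Ht0).
  assert (K1 : a1 * y1 + a0 * y0 = y0) by lra.
  assert (E_y1 : y1 = P * y0).
  { apply (Rmult_eq_reg_l a1); [|auto]. unfold P.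
    replace (a1 * ((1 - a0) / a1 * y0)) with ((1 - a0) * y0) by (field; auto). lra. }
  assert (E_yB1 : yB1 = y1) by lra.
  assert (K2 : d1 * y1 + a1 * y2 + d0 * y0 + a0 * y1 = y1) by lra.
  assert (E_y2 : y2 = (P ^ 2 + P') * y0).
  { apply (Rmult_eq_reg_l a1); [|auto]. rewrite E_y1 in K2. lra. }
  rewrite Ee in Ef.
  assert (Ef' : yA t0 - B1 t0 * y1 - B0 t0 * y0 = y2 * B2 t0) by (rewrite <- Ef; field; auto).
  assert (K3 : yA0 = B2 t0 * y2 + B1 t0 * y1 + B0 t0 * y0) by lra.
  rewrite E_y2, E_y1, F3 in K3.
  assert (ES : e2 + e1 + e0 = 1).
  { apply (Rmult_eq_reg_r y0); [|auto]. lra. }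
  split; [exact ES|]. split; [lra|]. split; [lra|]. split; [exact E_y1|]. split; [lra|]. exact E_y2.
-
  intros [ES [Ea [Eb [Ec [Ed Ee]]]]].
  assert (G1 : y0 = yB0) by lra.
  assert (G2 : y1 = yB1) by lra.
  assert (G3 : B2 t0 * y2 + B1 t0 * y1 + B0 t0 * y0 = yA0).
  { rewrite Ee, Ec, F3, ES. lra. }
  assert (G4 : y0 = yA0) by lra.
  assert (G5 : A1 t0 * y1 + A0 t0 * y0 = yB0).
  { rewrite <- Heqa1, <- Heqa0, Ec, F1. lra. }
  assert (G6 : Derive A1 t0 * y1 + A1 t0 * y2 + Derive A0 t0 * y0 + A0 t0 * y1 = yB1).
  { rewrite <- Heqa1, <- Heqa0, <- Heqd1, <- Heqd0, Ee, Ec, F2. lra. }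
  split; [|split]; intros x Hx y; split; intro H.
  + apply (C_to_BA t0 c3 c2 c1 c0 A1 A0 B2 B1 B0 y0 y1 y2); auto.
    apply (AB_to_C t0 c3 c2 c1 c0 A1 A0 B2 B1 B0 y0 y1 y2 yA0 yB0 yB1); auto.
  + apply (C_to_AB t0 c3 c2 c1 c0 A1 A0 B2 B1 B0 y0 y1 y2); auto.
    apply (BA_to_C t0 c3 c2 c1 c0 A1 A0 B2 B1 B0 y0 y1 y2 yA0 yB0 yB1); auto.
  + apply (AB_to_C t0 c3 c2 c1 c0 A1 A0 B2 B1 B0 y0 y1 y2 yA0 yB0 yB1); auto.
  + apply (C_to_AB t0 c3 c2 c1 c0 A1 A0 B2 B1 B0 y0 y1 y2); auto.
  + apply (BA_to_C t0 c3 c2 c1 c0 A1 A0 B2 B1 B0 y0 y1 y2 yA0 yB0 yB1); auto.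
  + apply (C_to_BA t0 c3 c2 c1 c0 A1 A0 B2 B1 B0 y0 y1 y2); auto.
Qed.

Opaque CW.

Lemma outAB_ext t0 (a1 a0 b2 b1 b0 a1' a0' b2' b1' b0' : R -> R) :
  (forall s, t0 <= s -> a1 s = a1' s /\ a0 s = a0' s /\ b2 s = b2' s /\ b1 s = b1' s /\ b0 s = b0' s) ->
  forall yA0 yB0 yB1 x y, outAB t0 a1 a0 b2 b1 b0 yA0 yB0 yB1 x y -> outAB t0 a1' a0' b2' b1' b0' yA0 yB0 yB1 x y.
Proof.
intros He yA0 yB0 yB1 x y [yA [H1 H2]]. exists yA. split.
- apply sol1_iff in H1. destruct H1 as [E I]. apply sol1_iff. split; auto.
  apply Int_ext_f with (2 := I). intros s Hs. destruct (He s Hs) as [E1 [E2 _]]. rewrite E1, E2. reflexivity.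
- apply sol2_iff in H2. destruct H2 as [z [E1 [E2 [I1 I2]]]]. apply sol2_iff. exists z. split; [auto|]. split; [auto|]. split; [auto|].
  apply Int_ext_f with (2 := I2). intros s Hs. destruct (He s Hs) as [_ [_ [F2 [F1 F0]]]]. rewrite F2, F1, F0. reflexivity.
Qed.

Lemma outBA_ext t0 (a1 a0 b2 b1 b0 a1' a0' b2' b1' b0' : R -> R) :
  (forall s, t0 <= s -> a1 s = a1' s /\ a0 s = a0' s /\ b2 s = b2' s /\ b1 s = b1' s /\ b0 s = b0' s) ->
  forall yA0 yB0 yB1 x y, outBA t0 a1 a0 b2 b1 b0 yA0 yB0 yB1 x y -> outBA t0 a1' a0' b2' b1' b0' yA0 yB0 yB1 x y.
Proof.
intros He yA0 yB0 yB1 x y [yB [H2 H1]]. exists yB. split.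
- apply sol2_iff in H2. destruct H2 as [z [E1 [E2 [I1 I2]]]]. apply sol2_iff. exists z. split; [auto|]. split; [auto|]. split; [auto|].
  apply Int_ext_f with (2 := I2). intros s Hs. destruct (He s Hs) as [_ [_ [F2 [F1 F0]]]]. rewrite F2, F1, F0. reflexivity.
- apply sol1_iff in H1. destruct H1 as [E I]. apply sol1_iff. split; auto.
  apply Int_ext_f with (2 := I). intros s Hs. destruct (He s Hs) as [E1 [E2 _]]. rewrite E1, E2. reflexivity.
Qed.

Lemma dec_ic_ext t0 (c3 c2 c1 c0 a1 a0 b2 b1 b0 a1' a0' b2' b1' b0' : R -> R) y0 y1 y2 yA0 yB0 yB1 :
  (forall s, t0 <= s -> a1 s = a1' s /\ a0 s = a0' s /\ b2 s = b2' s /\ b1 s = b1' s /\ b0 s = b0' s) ->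
  decomposed_ic t0 c3 c2 c1 c0 a1 a0 b2 b1 b0 y0 y1 y2 yA0 yB0 yB1 ->
  decomposed_ic t0 c3 c2 c1 c0 a1' a0' b2' b1' b0' y0 y1 y2 yA0 yB0 yB1.
Proof.
intros He [D1 [D2 D3]].
assert (He' : forall s, t0 <= s -> a1' s = a1 s /\ a0' s = a0 s /\ b2' s = b2 s /\ b1' s = b1 s /\ b0' s = b0 s).
{ intros s Hs. destruct (He s Hs) as [? [? [? [? ?]]]]. repeat split; auto. }
split; [|split]; intros x Hx y; split; intro H.
- apply (outBA_ext t0 a1 a0 b2 b1 b0); auto. apply D1; auto. apply (outAB_ext t0 a1' a0' b2' b1' b0'); auto.
- apply (outAB_ext t0 a1 a0 b2 b1 b0); auto. apply D1; auto. apply (outBA_ext t0 a1' a0' b2' b1' b0'); auto.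
- apply D2; auto. apply (outAB_ext t0 a1' a0' b2' b1' b0'); auto.
- apply (outAB_ext t0 a1 a0 b2 b1 b0); auto. apply D2; auto.
- apply D3; auto. apply (outBA_ext t0 a1' a0' b2' b1' b0'); auto.
- apply (outBA_ext t0 a1 a0 b2 b1 b0); auto. apply D3; auto.
Qed.

Theorem theorem1 (t0 : R) (c3 c2 c1 c0 : R -> R)
  (Hc3s : smooth_from t0 c3) (Hc2s : smooth_from t0 c2)
  (Hc1s : smooth_from t0 c1) (Hc0s : smooth_from t0 c0)
  (Hc3 : forall t, t0 <= t -> c3 t <> 0) :
  ( (exists a1 a0 b2 b1 b0 : R -> R,
        diff2_from t0 a1 /\ diff2_from t0 a0 /\
        diff1_from t0 b2 /\ diff1_from t0 b1 /\ diff1_from t0 b0 /\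
        (forall t, t0 <= t -> a1 t <> 0) /\ (forall t, t0 <= t -> b2 t <> 0) /\
        decomposed_eq t0 c3 c2 c1 c0 a1 a0 b2 b1 b0)
    <->
    (exists e2 e1 e0 : R, e2 <> 0 /\ coeff_cond t0 c3 c2 c1 c0 e2 e1 e0) )
  /\
  (forall e2 e1 e0 : R, e2 <> 0 -> coeff_cond t0 c3 c2 c1 c0 e2 e1 e0 ->
   forall y0 y1 y2 yA0 yB0 yB1 : R, y0 <> 0 ->
     ( decomposed_ic t0 c3 c2 c1 c0
         (a1f e2 c3) (a0f e2 e1 c3 c2)
         (b2f e2 c3) (b1f e2 e1 c3 c2) (b0f e2 e1 e0 c3 c2)
         y0 y1 y2 yA0 yB0 yB1
       <->
       e2 + e1 + e0 = 1 /\
       yA0 = y0 /\ yB0 = y0 /\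
       y1 = Pf e2 e1 c3 c2 t0 * y0 /\ yB1 = Pf e2 e1 c3 c2 t0 * y0 /\
       y2 = ((Pf e2 e1 c3 c2 t0) ^ 2 + Derive (Pf e2 e1 c3 c2) t0) * y0 )).
Proof.
split.
- split.
  + intros [a1 [a0 [b2 [b1 [b0 [H1 [H2 [H3 [H4 [H5 [H6 [H7 H8]]]]]]]]]]]].
    apply (part1_fwd t0 c3 c2 c1 c0 Hc3 a1 a0 b2 b1 b0); auto.
  + intros [e2 [e1 [e0 [He2 Hcc]]]].
    destruct (nice_exists t0 c3 c2 c1 c0 Hc3s Hc2s Hc3 e2 e1 e0 He2 Hcc)
      as [A1 [A0 [B2 [B1 [B0 [H1 [H2 [H3 [H4 [H5 [H6 [H7 [H8 _]]]]]]]]]]]]].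
    exists A1, A0, B2, B1, B0. exact (conj H1 (conj H2 (conj H3 (conj H4 (conj H5 (conj H6 (conj H7 H8))))))).
- intros e2 e1 e0 He2 Hcc y0 y1 y2 yA0 yB0 yB1 Hy0.
  destruct (nice_exists t0 c3 c2 c1 c0 Hc3s Hc2s Hc3 e2 e1 e0 He2 Hcc)
    as [A1 [A0 [B2 [B1 [B0 [H1 [H2 [H3 [H4 [H5 [H6 [H7 [H8 [He Hf]]]]]]]]]]]]]].
  assert (HN : NiceH t0 c3 c2 c1 c0 A1 A0 B2 B1 B0).
  { unfold NiceH. refine (conj H1 (conj H2 (conj H3 (conj H4 (conj H5 (conj H6 (conj H7 (conj H8 (conj _ Hc3))))))))).
    intros t Ht. split; [|split; [|split]]; apply (@ex_derive_continuous R_AbsRing R_NormedModule);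
    first [exact (Hc3s 0%nat t Ht) | exact (Hc2s 0%nat t Ht) | exact (Hc1s 0%nat t Ht) | exact (Hc0s 0%nat t Ht)]. }
  assert (Hiff := part2_nice t0 c3 c2 c1 c0 A1 A0 B2 B1 B0 e2 e1 e0 HN Hf y0 y1 y2 yA0 yB0 yB1 Hy0).
  assert (HPs : forall s, t0 <= s -> Pf e2 e1 c3 c2 s = (1 - A0 s) / A1 s).
  { intros s Hs. destruct (He s Hs) as [EA1 [EA0 _]]. rewrite EA1, EA0.
    unfold Pf, a1f, a0f. rewrite cbrt_div, cbrt_div by auto.
    assert (Hq : cbrt (c3 s) <> 0) by (apply cbrt_nz; auto).
    assert (Hce : cbrt e2 <> 0) by (apply cbrt_nz; auto).
    assert (Hq3 : c3 s = cbrt (c3 s) ^ 3) by (rewrite cbrt_cube; auto).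
    assert (He3 : e2 = cbrt e2 ^ 3) by (rewrite cbrt_cube; auto).
    remember (cbrt (c3 s)) as q. remember (cbrt e2) as ce.
    rewrite Hq3, He3. field. nz. }
  assert (HP : Pf e2 e1 c3 c2 t0 = (1 - A0 t0) / A1 t0) by (apply HPs; lra).
  assert (HDP : Derive (Pf e2 e1 c3 c2) t0 = Derive (fun s => (1 - A0 s) / A1 s) t0).
  { apply Derive_right. intros s Hs. apply HPs. lra. }
  rewrite HP, HDP.
  assert (Hext : forall s, t0 <= s -> A1 s = a1f e2 c3 s /\ A0 s = a0f e2 e1 c3 c2 s /\ B2 s = b2f e2 c3 s /\
        B1 s = b1f e2 e1 c3 c2 s /\ B0 s = b0f e2 e1 e0 c3 c2 s) by exact He.
  assert (Hext' : forall s, t0 <= s -> a1f e2 c3 s = A1 s /\ a0f e2 e1 c3 c2 s = A0 s /\ b2f e2 c3 s = B2 s /\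
        b1f e2 e1 c3 c2 s = B1 s /\ b0f e2 e1 e0 c3 c2 s = B0 s).
  { intros s Hs. destruct (He s Hs) as [? [? [? [? ?]]]]. repeat split; auto. }
  split; intro H.
  + apply Hiff. apply (dec_ic_ext t0 c3 c2 c1 c0 (a1f e2 c3) (a0f e2 e1 c3 c2) (b2f e2 c3) (b1f e2 e1 c3 c2) (b0f e2 e1 e0 c3 c2)); auto.
  + apply (dec_ic_ext t0 c3 c2 c1 c0 A1 A0 B2 B1 B0); auto. apply Hiff; auto.
Qed.
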